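(* Let $p=k_{w_1}+k_{w_2}$ and let $W_1\in\mathbb{R}^{p\times n}$ be a constant (unknown) matrix. Along a given closed-loop trajectory, suppose the state $x:[0,\infty)\to\mathbb{R}^n$ satisfies $$\dot x(t)=W_1^T\Phi(t)+\varepsilon_T(t),$$ where $\Phi:[0,\infty)\to\mathbb{R}^p$ (the regressor $\Phi(t)=\Phi(x(t),u(t))$) and $\varepsilon_T:[0,\infty)\to\mathbb{R}^n$ are piecewise continuous and bounded, $\|\Phi(t)\|\le p_1$, $\|\varepsilon_T(t)\|\le p_2$. Fix scalars $k>0$, $l>0$ and define filtered signals by $$k\dot\Phi_f+\Phi_f=\Phi,\quad k\dot x_f+x_f=x,\quad k\dot\varepsilon_{Tf}+\varepsilon_{Tf}=\varepsilon_T,$$ with $\Phi_f(0)=0$, $x_f(0)=x(0)$, $\varepsilon_{Tf}(0)=0$, and $$\Pi(t)=\int_0^t e^{-l(t-s)}\Phi_f(s)\Phi_f^T(s)\,ds,\qquad K(t)=\int_0^t e^{-l(t-s)}\Phi_f(s)\dot x_f(s)^T\,ds .$$ Fix recorded times $t_1,\dots,t_N$ (with $N\ge p$) and set $\Pi_j=\Pi(t_j)$, $K_j=K(t_j)$. Let $\Gamma_1\in\mathbb{R}^{p\times p}$ be a constant symmetric positive definite matrix, and let the estimate $\hat W_1(t)\in\mathbb{R}^{p\times n}$ evolve according to $$\dot{\hat W}_1=-\Gamma_1\Big(\Pi\hat W_1-K+\sum_{j=1}^N\big(\Pi_j\hat W_1-K_j\big)\Big).$$ Let $\tilde W_1=W_1-\hat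 W_1$ and $P(t)=\Pi(t)+\sum_{j=1}^N\Pi_j$. Assume $\Phi$ is persistently excited and that there exist $T_1>0$ and $\lambda_0>0$ with $\lambda_{\min}(P(t))\ge\lambda_0$ for all $t\ge T_1$. Then, with $V_1=\tfrac12\operatorname{tr}(\tilde W_1^T\Gamma_1^{-1}\tilde W_1)$: (i) if $\varepsilon_T\equiv0$, then $\dot V_1\le-\lambda_0\|\tilde W_1\|^2$ for $t\ge T_1$ and $\tilde W_1(t)\to0$ as $t\to\infty$ (asymptotic stability of $\tilde W_1=0$); (ii) in general, with $y_1(t)=-\int_0^te^{-l(t-\tau)}\Phi_f(\tau)\varepsilon_{Tf}^T(\tau)d\tau$, $y_{1j}=y_1(t_j)$, there is a constant $\nu_1$ with $\|y_1(t)+\sum_{j=1}^Ny_{1j}\|\le\nu_1$ for all $t$, and for $t\ge T_1$, $\dot V_1\le-\lambda_0\|\tilde W_1\|^2+\nu_1\|\tilde W_1\|$; hence $\dot V_1<0$ whenever $\|\tilde W_1\|>\nu_1/\lambda_0$, and $\tilde W_1$ is uniformly ultimately bounded.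
   Context: Norms of matrices are Frobenius norms. Persistent excitation of $\Phi$ means: there exist $\alpha_1,\alpha_2,T_1>0$ such that $\alpha_1I\le\int_t^{t+T_1}\Phi(\tau)\Phi^T(\tau)d\tau\le\alpha_2I$ for all $t>0$. Uniform ultimate boundedness (UUB) of a signal means there is a bound $b$ and for every initial condition a finite time after which the signal's norm stays below $b$. The model arises from a control-affine system $\dot x=f(x)+g(x)u$ with $f(x)=w_1\xi_1(x)+\epsilon_f$, $g(x)=w_2\xi_2(x)+\epsilon_g$, $W_1=[w_1^T;w_2^T]$, $\Phi=[\xi_1^T,u^T\xi_2^T]^T$, $\varepsilon_T=\epsilon_f+\epsilon_gu$. *)

(* Defs.v *)
(* Matrices/vectors are represented as functions nat -> nat -> R / nat -> R;
   dimensions are passed explicitly and only in-range entries are ever used. *)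
From Stdlib Require Import Reals Lra.
Open Scope R_scope.

Definition vec := nat -> R.
Definition mat := nat -> nat -> R.

Fixpoint fsum (N : nat) (f : nat -> R) : R :=
  match N with O => 0 | S N' => fsum N' f + f N' end.

Definition mmul (q : nat) (A B : mat) : mat :=
  fun i j => fsum q (fun r => A i r * B r j).
Definition mvec (q : nat) (A : mat) (v : vec) : vec :=
  fun i => fsum q (fun r => A i r * v r).
Definition madd (A B : mat) : mat := fun i j => A i j + B i j.
Definition msub (A B : mat) : mat := fun i j => A i j - B i j.
Definition mopp (A : mat) : mat := fun i j => - A i j.
Definition mscal (c : R) (A : mat) : mat := fun i j => c * A i j.
Definition mtr (A : mat) : mat := fun i j => A j i.
Definition msum (N : nat) (F : nat -> mat) : mat :=
  fun i j => fsum N (fun q => F q i j).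
Definition idm : mat := fun i j => if Nat.eqb i j then 1 else 0.
Definition trace (m : nat) (A : mat) : R := fsum m (fun i => A i i).

Definition frob (m n : nat) (A : mat) : R :=
  sqrt (fsum m (fun i => fsum n (fun j => A i j ^ 2))).
Definition vnorm (m : nat) (v : vec) : R := sqrt (fsum m (fun i => v i ^ 2)).

Definition quad (m : nat) (A : mat) (v : vec) : R :=
  fsum m (fun i => fsum m (fun j => v i * A i j * v j)).
Definition nonzero_vec (m : nat) (v : vec) : Prop := exists i, (i < m)%nat /\ v i <> 0.
Definition symmetric (m : nat) (A : mat) : Prop :=
  forall i j, (i < m)%nat -> (j < m)%nat -> A i j = A j i.
Definition pos_def (m : nat) (A : mat) : Prop :=
  forall v, nonzero_vec m v -> 0 < quad m A v.
Definition is_inverse (m : nat) (A B : mat) : Prop :=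
  forall i j, (i < m)%nat -> (j < m)%nat ->
    mmul m A B i j = idm i j /\ mmul m B A i j = idm i j.
Definition loewner_le (m : nat) (A B : mat) : Prop :=
  forall v, 0 <= quad m (msub B A) v.

(* (real) eigenvalues; lambda_min(A) >= lam0 for the symmetric matrices used *)
Definition is_eigenvalue (m : nat) (A : mat) (lam : R) : Prop :=
  exists v, nonzero_vec m v /\
    forall i, (i < m)%nat -> fsum m (fun j => A i j * v j) = lam * v i.
Definition lambda_min_ge (m : nat) (A : mat) (lam0 : R) : Prop :=
  forall lam, is_eigenvalue m A lam -> lam0 <= lam.

Definition cont_nonneg (f : R -> R) : Prop :=
  forall t, 0 <= t -> forall eps, 0 < eps -> exists delta, 0 < delta /\
    forall s, 0 <= s -> Rabs (s - t) < delta -> Rabs (f s - f t) < eps.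

Definition right_lim (f : R -> R) (a L : R) : Prop :=
  forall eps, 0 < eps -> exists delta, 0 < delta /\
    forall s, a < s < a + delta -> Rabs (f s - L) < eps.
Definition left_lim (f : R -> R) (b L : R) : Prop :=
  forall eps, 0 < eps -> exists delta, 0 < delta /\
    forall s, b - delta < s < b -> Rabs (f s - L) < eps.

Definition piecewise_continuous (f : R -> R) : Prop :=
  forall T, 0 < T -> exists (m : nat) (s : nat -> R),
    s O = 0 /\ s m = T /\
    forall i, (i < m)%nat ->
      s i < s (S i) /\
      (forall t, s i < t < s (S i) -> continuity_pt f t) /\
      (exists L, right_lim f (s i) L) /\
      (exists L, left_lim f (s (S i)) L).

Definition pc_vec (m : nat) (f : R -> vec) : Prop :=
  forall i, (i < m)%nat -> piecewise_continuous (fun t => f t i).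
Definition cont_at_vec (m : nat) (f : R -> vec) (t : R) : Prop :=
  forall i, (i < m)%nat -> continuity_pt (fun s => f s i) t.

Definition is_integral (f : R -> R) (a b v : R) : Prop :=
  exists pr : Riemann_integrable f a b, RiemannInt pr = v.

Definition persistently_exciting (m : nat) (Phi : R -> vec) : Prop :=
  exists a1 a2 T, 0 < a1 /\ 0 < a2 /\ 0 < T /\
    forall t, 0 < t -> exists M : mat,
      (forall i j, (i < m)%nat -> (j < m)%nat ->
         is_integral (fun s => Phi s i * Phi s j) t (t + T) (M i j)) /\
      loewner_le m (mscal a1 idm) M /\ loewner_le m M (mscal a2 idm).

Definition estimator_law (p n : nat) (Gamma : mat) (Pi K : R -> mat)
    (N : nat) (ts : nat -> R) (What : R -> mat) : Prop :=
  forall t, 0 < t -> forall i j, (i < p)%nat -> (j < n)%nat ->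
    derivable_pt_lim (fun s => What s i j) t
      (mopp (mmul p Gamma
         (madd (msub (mmul p (Pi t) (What t)) (K t))
               (msum N (fun q => msub (mmul p (Pi (ts q)) (What t)) (K (ts q))))))
       i j).

Definition V1 (p n : nat) (Ginv : mat) (Wt : mat) : R :=
  / 2 * trace n (mmul p (mtr Wt) (mmul p Ginv Wt)).

(* Main.v *)
Require Import Defs.
From Stdlib Require Import Reals.
Open Scope R_scope.
From Stdlib Require Import Lra Lia Psatz List Classical ClassicalEpsilon.

Module MCspec.
From mathcomp Require Import all_boot all_order all_algebra.
From mathcomp Require Import all_classical all_reals all_analysis.
From mathcomp Require Import Rstruct Rstruct_topology.
From mathcomp Require Import lra.
Import Order.TTheory GRing.Theory Num.Theory.
Local Open Scope classical_set_scope.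
Local Open Scope ring_scope.

Lemma sph_min (m : nat) (A : 'I_m.+1 -> 'I_m.+1 -> R) :
  exists2 c : 'rV[R]_m.+1, \sum_i c ord0 i ^+ 2 = 1 &
    forall v : 'rV[R]_m.+1, \sum_i v ord0 i ^+ 2 = 1 ->
      \sum_i \sum_j c ord0 i * A i j * c ord0 j <= \sum_i \sum_j v ord0 i * A i j * v ord0 j.
Proof.
pose g := fun v : 'rV[R]_m.+1 => \sum_i v ord0 i ^+ 2.
pose f := fun v : 'rV[R]_m.+1 => \sum_i \sum_j v ord0 i * A i j * v ord0 j.
pose S := g @^-1` [set (1:R)].
have gc : continuous g.
  apply: (@continuous_big R _ +%R 0 xpredT); first exact: (@add_continuous R^o); move=> i _.
  move=> x; apply: continuousM; exact: coord_continuous.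
have fc : continuous f.
  apply: (@continuous_big R _ +%R 0 xpredT); first exact: (@add_continuous R^o); move=> i _.
  apply: (@continuous_big R _ +%R 0 xpredT); first exact: (@add_continuous R^o); move=> j _.
  move=> x.
  apply: (@continuousM R _ (fun v : 'rV[R]_m.+1 => v ord0 i * A i j) (fun v => v ord0 j)).
  - apply: (@continuousM R _ (fun v : 'rV[R]_m.+1 => v ord0 i) (fun v => A i j)).
    exact: coord_continuous. exact: cst_continuous.
  - exact: coord_continuous.
have Sne : S !=set0.
  exists (\row_j (if j == ord0 then (1:R) else 0)).
  rewrite /S /g /= (bigD1 ord0) //= big1 ?mxE ?eqxx ?addr0 ?expr1n //.
  by move=> i /negPf Hi; rewrite mxE Hi expr0n.
have Scl : closed S.
  apply: preimage_closed; last exact: closed_eq.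
  by move=> x _; apply: gc.
have Sb : bounded_set S.
  exists 1; split; first by rewrite realE ler01.
  move=> M M1 v Sv /=.
  apply: (le_trans _ (ltW M1)).
  change (mx_norm v <= 1); rewrite mx_normrE; apply/bigmax_leP; split => //.
  move=> [i0 i] _ /=; rewrite (ord1 i0).
  have : v ord0 i ^+ 2 <= g v.
    rewrite /g (bigD1 i) //= lerDl; apply: sumr_ge0 => k _; exact: sqr_ge0.
  rewrite Sv.
  move=> H; have H1 : v ord0 i ^+ 2 <= 1 := H.
  rewrite ler_norml; apply/andP; split; nra.
have Scp : compact S by apply: bounded_closed_compact.
have [c cS cmin] := EVT_min_rV Sne Scp (continuous_subspaceT fc).
exists c; first by move: cS; rewrite inE.
by move=> v Hv; apply: cmin; rewrite inE.
Qed.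

Lemma fsum_big (m : nat) (g : nat -> R) : fsum m g = \sum_(i < m) g i.
Proof.
elim: m => [|m IH]; first by rewrite big_ord0.
by rewrite big_ord_recr /= IH.
Qed.

Lemma sph_min_nat (m : nat) (A : mat) : (0 < m)%N ->
  exists u : vec, fsum m (fun i => pow (u i) 2) = R1 /\
   forall v : vec, fsum m (fun i => pow (v i) 2) = R1 -> Rle (quad m A u) (quad m A v).
Proof.
case: m => [//|m] _.
have [c c1 cmin] := sph_min m (fun i j : 'I_m.+1 => A i j).
pose u : vec := fun i => c ord0 (inord i).
have uE : forall o : 'I_m.+1, u o = c ord0 o.
  by move=> o; rewrite /u inord_val.
exists u; split.
  rewrite fsum_big; apply: etrans c1; apply: eq_bigr => i _; by rewrite uE RpowE.
move=> v v1.
pose vr := \row_(j < m.+1) v j.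
have := cmin vr.
rewrite /quad !fsum_big.
have E : forall (w : vec) (r : 'rV[R]_m.+1), (forall o : 'I_m.+1, w o = r ord0 o) ->
   \sum_(i < m.+1) fsum m.+1 (fun j => w i * A i j * w j) = \sum_(i < m.+1) \sum_(j < m.+1) r ord0 i * A i j * r ord0 j.
  move=> w r Hw; apply: eq_bigr => i _; rewrite fsum_big; apply: eq_bigr => j _.
  by rewrite !Hw.
rewrite (E u c uE) (E v vr); last by move=> o; rewrite mxE.
move=> H; apply/RleP; apply: H.
apply: etrans v1; rewrite fsum_big; apply: eq_bigr => i _; by rewrite mxE RpowE.
Qed.

End MCspec.

Set Bullet Behavior "Strict Subproofs".
Open Scope R_scope.

Lemma fsum_ext N f g : (forall i, (i < N)%nat -> f i = g i) -> fsum N f = fsum N g.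
Proof.
  induction N as [|N IH]; intros H; simpl; [reflexivity|].
  rewrite IH by (intros; apply H; lia). rewrite (H N) by lia. reflexivity.
Qed.

Lemma fsum_plus N f g : fsum N (fun i => f i + g i) = fsum N f + fsum N g.
Proof. induction N; simpl; [ring| rewrite IHN; ring]. Qed.

Lemma fsum_minus N f g : fsum N (fun i => f i - g i) = fsum N f - fsum N g.
Proof. induction N; simpl; [ring| rewrite IHN; ring]. Qed.

Lemma fsum_opp N f : fsum N (fun i => - f i) = - fsum N f.
Proof. induction N; simpl; [ring| rewrite IHN; ring]. Qed.

Lemma fsum_scal N c f : fsum N (fun i => c * f i) = c * fsum N f.
Proof. induction N; simpl; [ring| rewrite IHN; ring]. Qed.

Lemma fsum_scalr N c f : fsum N (fun i => f i * c) = fsum N f * c.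
Proof. induction N; simpl; [ring| rewrite IHN; ring]. Qed.

Lemma fsum_zero N f : (forall i, (i < N)%nat -> f i = 0) -> fsum N f = 0.
Proof. intros H; rewrite (fsum_ext N f (fun _ => 0)) by auto. induction N; simpl; [ring|rewrite IHN by (intros; apply H; lia); ring]. Qed.

Lemma fsum_const N c : fsum N (fun _ => c) = INR N * c.
Proof. induction N; simpl fsum; [simpl; ring| rewrite IHN, S_INR; ring]. Qed.

Lemma fsum_swap N M (f : nat -> nat -> R) :
  fsum N (fun i => fsum M (fun j => f i j)) = fsum M (fun j => fsum N (fun i => f i j)).
Proof.
  induction N; simpl.
  - symmetry; apply fsum_zero; auto.
  - rewrite IHN, <- fsum_plus. reflexivity.
Qed.

Lemma fsum_le N f g : (forall i, (i < N)%nat -> f i <= g i) -> fsum N f <= fsum N g.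
Proof.
  induction N as [|N IH]; intros H; simpl; [lra|].
  assert (fsum N f <= fsum N g) by (apply IH; intros; apply H; lia).
  assert (f N <= g N) by (apply H; lia). lra.
Qed.

Lemma fsum_nonneg N f : (forall i, (i < N)%nat -> 0 <= f i) -> 0 <= fsum N f.
Proof. intros H. replace 0 with (fsum N (fun _ => 0)). apply fsum_le; auto. apply fsum_zero; auto. Qed.

Lemma fsum_abs N f : Rabs (fsum N f) <= fsum N (fun i => Rabs (f i)).
Proof.
  induction N; simpl. rewrite Rabs_R0; lra.
  eapply Rle_trans; [apply Rabs_triang|]. lra.
Qed.

Lemma fsum_term_le N f i : (forall j, (j < N)%nat -> 0 <= f j) -> (i < N)%nat -> f i <= fsum N f.
Proof.
  induction N as [|N IH]; intros H Hi; [lia|]. simpl.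
  destruct (Nat.eq_dec i N) as [->|Hne].
  - assert (0 <= fsum N f) by (apply fsum_nonneg; intros; apply H; lia). lra.
  - assert (f i <= fsum N f) by (apply IH; [intros; apply H; lia| lia]).
    assert (0 <= f N) by (apply H; lia). lra.
Qed.

Lemma fsum_delta N i f : (i < N)%nat ->
  fsum N (fun j => (if Nat.eqb i j then 1 else 0) * f j) = f i.
Proof.
  induction N as [|N IH]; intros Hi; [lia|]. simpl.
  destruct (Nat.eq_dec i N) as [->|Hne].
  - rewrite Nat.eqb_refl. rewrite fsum_zero. ring.
    intros j Hj. destruct (Nat.eqb_spec N j); [lia|ring].
  - rewrite IH by lia. destruct (Nat.eqb_spec i N); [lia|ring].
Qed.

Lemma fsum_delta' N i f : (i < N)%nat ->
  fsum N (fun j => f j * (if Nat.eqb j i then 1 else 0)) = f i.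
Proof.
  intros Hi. rewrite <- (fsum_delta N i f Hi). apply fsum_ext; intros j _.
  destruct (Nat.eqb_spec j i); destruct (Nat.eqb_spec i j); try lia; ring.
Qed.

Lemma fsum_zero_sq N f : fsum N (fun i => f i ^ 2) = 0 -> forall i, (i < N)%nat -> f i = 0.
Proof.
  intros H i Hi.
  assert (f i ^ 2 <= 0).
  { rewrite <- H. apply (fsum_term_le N (fun i => f i ^ 2)); auto. intros; apply pow2_ge_0. }
  nra.
Qed.

Lemma lin_quad_zero a b : (forall s, 0 <= a * s + b * s ^ 2) -> a = 0.
Proof.
  intros H. destruct (Req_dec a 0) as [|Ha]; auto. exfalso.
  set (c := 1 + Rabs b).
  assert (Hc : 0 < c) by (unfold c; pose proof (Rabs_pos b); lra).
  specialize (H (- a / c)).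
  assert (Hb : b <= Rabs b) by apply RRle_abs.
  assert (Ha2 : 0 < a * a) by (destruct (Rlt_or_le a 0); nra).
  replace (a * (- a / c) + b * (- a / c) ^ 2) with ((a*a) * (b - c) / (c * c)) in H by (field; lra).
  assert (0 <= a * a * (b - c) / (c * c)) by exact H.
  assert (a * a * (b - c) < 0) by (unfold c in *; nra).
  assert (0 < c * c) by nra.
  apply (Rmult_le_compat_r (c * c)) in H0; [|lra].
  unfold Rdiv in H0. rewrite Rmult_assoc, Rinv_l in H0 by lra. lra.
Qed.

Definition bil m (A : mat) (a b : vec) := fsum m (fun i => fsum m (fun j => a i * A i j * b j)).
Definition sq m (v : vec) := fsum m (fun i => v i ^ 2).
Definition dot m (a b : vec) := fsum m (fun i => a i * b i).

Lemma sq_nonneg m v : 0 <= sq m v.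
Proof. apply fsum_nonneg; intros; apply pow2_ge_0. Qed.

Lemma quad_expand m A u w s : symmetric m A ->
  quad m A (fun i => u i + s * w i) = quad m A u + 2 * s * bil m A w u + s ^ 2 * quad m A w.
Proof.
  intros HS. unfold quad, bil.
  transitivity (fsum m (fun i => fsum m (fun j => u i * A i j * u j))
     + s * fsum m (fun i => fsum m (fun j => w i * A i j * u j))
     + s * fsum m (fun i => fsum m (fun j => u i * A i j * w j))
     + s ^ 2 * fsum m (fun i => fsum m (fun j => w i * A i j * w j))).
  - rewrite <- !fsum_scal, <- !fsum_plus. apply fsum_ext; intros i Hi.
    rewrite <- !fsum_scal, <- !fsum_plus. apply fsum_ext; intros j Hj. ring.
  - assert (E : fsum m (fun i => fsum m (fun j => u i * A i j * w j)) =
                fsum m (fun i => fsum m (fun j => w i * A i j * u j))).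
    { rewrite fsum_swap. apply fsum_ext; intros i Hi. apply fsum_ext; intros j Hj.
      rewrite (HS j i) by auto. ring. }
    rewrite E. ring.
Qed.

Lemma sq_expand m u w s : sq m (fun i => u i + s * w i) = sq m u + 2 * s * dot m w u + s ^ 2 * sq m w.
Proof.
  unfold sq, dot. rewrite <- !fsum_scal, <- !fsum_plus. apply fsum_ext; intros; ring.
Qed.

Lemma quad_scale m A v c : quad m A (fun i => c * v i) = c ^ 2 * quad m A v.
Proof.
  unfold quad. rewrite <- fsum_scal. apply fsum_ext; intros i _.
  rewrite <- fsum_scal. apply fsum_ext; intros; ring.
Qed.

Lemma sq_scale m v c : sq m (fun i => c * v i) = c ^ 2 * sq m v.
Proof. unfold sq. rewrite <- fsum_scal. apply fsum_ext; intros; ring. Qed.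

Lemma quad_zero m A v : sq m v = 0 -> quad m A v = 0.
Proof.
  intros H. pose proof (fsum_zero_sq m v H) as Z. unfold quad.
  apply fsum_zero; intros i Hi. rewrite (Z i Hi). apply fsum_zero; intros; ring.
Qed.

Lemma quad_lower m (A : mat) lam0 : symmetric m A -> lambda_min_ge m A lam0 ->
  forall v, lam0 * sq m v <= quad m A v.
Proof.
  intros HS HL v.
  destruct m as [|m'].
  - unfold sq, quad; simpl; lra.
  - set (m := S m').
    destruct (MCspec.sph_min_nat m A) as [u [Hu Hmin]].
    { apply (Corelib.ssr.ssrbool.introT ssrnat.ltP). unfold m; lia. }
    set (mu := quad m A u).
    assert (Hray : forall w, mu * sq m w <= quad m A w).
    { intros w. destruct (Req_dec (sq m w) 0) as [H0|H0].
      - rewrite H0, quad_zero by auto. lra.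
      - pose proof (sq_nonneg m w).
        set (c := / sqrt (sq m w)).
        assert (Hs : 0 < sqrt (sq m w)) by (apply sqrt_lt_R0; lra).
        assert (Hc2 : c ^ 2 * sq m w = 1).
        { unfold c. rewrite <- Rinv_pow by lra. simpl. rewrite Rmult_1_r, sqrt_sqrt by lra. field. lra. }
        assert (H1 : sq m (fun i => c * w i) = 1) by (rewrite sq_scale; auto).
        pose proof (Hmin _ H1) as Hm. rewrite quad_scale in Hm. fold mu in Hm.
        assert (Hcp : 0 < c ^ 2) by (unfold c; apply pow_lt; apply Rinv_0_lt_compat; auto).
        apply (Rmult_le_compat_l (sq m w)) in Hm; [|lra].
        replace (sq m w * (c ^ 2 * quad m A w)) with ((c ^ 2 * sq m w) * quad m A w) in Hm by ring.
        rewrite Hc2 in Hm. lra. }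
    assert (Heig : is_eigenvalue m A mu).
    { exists u. split.
      - destruct (Classical_Prop.classic (exists i, (i < m)%nat /\ u i <> 0)) as [Hx|Hx]; auto.
        exfalso. assert (sq m u = 0).
        { apply fsum_zero. intros i Hi. destruct (Req_dec (u i) 0) as [E|E]; [rewrite E; ring|].
          exfalso; apply Hx; eauto. }
        unfold sq in H. lra.
      - intros i Hi.
        set (w := fun j : nat => if Nat.eqb j i then 1 else 0).
        assert (Hq : forall s, 0 <= (2 * (bil m A w u - mu * dot m w u)) * s
                         + (quad m A w - mu * sq m w) * s ^ 2).
        { intros s. pose proof (Hray (fun j => u j + s * w j)) as Hr.
          rewrite quad_expand, sq_expand in Hr by auto. fold mu in Hr.
          unfold sq in Hr at 1. rewrite Hu in Hr. fold (sq m w) in Hr. nra. }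
        apply lin_quad_zero in Hq.
        assert (Eb : bil m A w u = fsum m (fun j => A i j * u j)).
        { unfold bil.
          rewrite <- (fsum_delta' m i (fun k => fsum m (fun j => A k j * u j))) by auto.
          apply fsum_ext; intros k _. rewrite <- fsum_scalr. apply fsum_ext; intros j _. unfold w. ring. }
        assert (Ed : dot m w u = u i).
        { unfold dot. rewrite <- (fsum_delta' m i u) by auto. apply fsum_ext; intros j _; unfold w; ring. }
        rewrite Eb, Ed in Hq. lra. }
    pose proof (HL mu Heig). pose proof (Hray v). pose proof (sq_nonneg m v). nra.
Qed.

Lemma discr a b c : 0 <= c -> (forall s, 0 <= a + 2 * b * s + c * s ^ 2) -> b ^ 2 <= a * c.
Proof.
  intros Hc H. destruct (Rle_lt_or_eq_dec 0 c Hc) as [Hc'|Hc'].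
  - specialize (H (- b / c)).
    replace (a + 2 * b * (- b / c) + c * (- b / c) ^ 2) with ((a * c - b ^ 2) / c) in H by (field; lra).
    apply (Rmult_le_compat_r c) in H; [|lra]. unfold Rdiv in H.
    rewrite Rmult_assoc, Rinv_l, Rmult_0_l in H by lra. lra.
  - subst c. destruct (Req_dec b 0) as [->|Hb]; [lra|].
    specialize (H (- (Rabs a + 1) / (2 * b))).
    replace (a + 2 * b * (- (Rabs a + 1) / (2 * b)) + 0 * (- (Rabs a + 1) / (2 * b)) ^ 2)
      with (a - (Rabs a + 1)) in H by (field; auto).
    pose proof (RRle_abs a). lra.
Qed.

Lemma not_nonzero_zero m v : ~ nonzero_vec m v -> forall i, (i < m)%nat -> v i = 0.
Proof.
  intros H i Hi. destruct (Req_dec (v i) 0); auto. exfalso; apply H; exists i; auto.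
Qed.

Lemma quad_zero' m A v : (forall i, (i < m)%nat -> v i = 0) -> quad m A v = 0.
Proof. intros Z. unfold quad. apply fsum_zero; intros i Hi. rewrite (Z i Hi). apply fsum_zero; intros; ring. Qed.

Lemma posdef_nonneg m A v : pos_def m A -> 0 <= quad m A v.
Proof.
  intros HP. destruct (Classical_Prop.classic (nonzero_vec m v)) as [H|H].
  - left; apply HP; auto.
  - rewrite quad_zero'; [lra| apply not_nonzero_zero; auto].
Qed.

Lemma bil_CS m A u v : symmetric m A -> pos_def m A -> (bil m A u v) ^ 2 <= quad m A u * quad m A v.
Proof.
  intros HS HP. apply discr; [apply posdef_nonneg; auto|].
  intros s. pose proof (posdef_nonneg m A (fun i => u i + s * v i) HP) as H.
  rewrite quad_expand in H by auto.
  assert (E : bil m A v u = bil m A u v).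
  { unfold bil. rewrite fsum_swap. apply fsum_ext; intros i Hi; apply fsum_ext; intros j Hj.
    rewrite (HS j i) by auto. ring. }
  rewrite E in H. nra.
Qed.

Definition asum m (A : mat) := fsum m (fun r => fsum m (fun q => Rabs (A r q))).

Lemma asum_nonneg m A : 0 <= asum m A.
Proof. apply fsum_nonneg; intros; apply fsum_nonneg; intros; apply Rabs_pos. Qed.

Lemma sq_term m v i : (i < m)%nat -> v i ^ 2 <= sq m v.
Proof. intros Hi. apply (fsum_term_le m (fun i => v i ^ 2)); auto. intros; apply pow2_ge_0. Qed.

Lemma quad_upper m A v : quad m A v <= asum m A * sq m v.
Proof.
  unfold quad, asum. rewrite <- fsum_scalr. apply fsum_le; intros r Hr.
  rewrite <- fsum_scalr. apply fsum_le; intros q Hq.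
  pose proof (sq_term m v r Hr). pose proof (sq_term m v q Hq).
  pose proof (Rabs_pos (A r q)).
  assert (v r * A r q * v q <= Rabs (A r q) * (Rabs (v r) * Rabs (v q))).
  { rewrite <- !Rabs_mult. replace (v r * A r q * v q) with (A r q * (v r * v q)) by ring. apply RRle_abs. }
  assert (Rabs (v r) * Rabs (v q) <= sq m v).
  { pose proof (Rabs_pos (v r)); pose proof (Rabs_pos (v q)).
    rewrite <- (pow2_abs (v r)) in *. rewrite <- (pow2_abs (v q)) in *.
    nra. }
  nra.
Qed.

Lemma inv_sym p (G Gi : mat) : symmetric p G -> is_inverse p G Gi -> symmetric p Gi.
Proof.
  intros HS HI i j Hi Hj.
  (* Gi j i = sum_l (sum_k Gi k i G l k) Gi l j ... *)
  assert (E1 : Gi j i = fsum p (fun k => Gi k i * idm k j)).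
  { rewrite (fsum_ext p _ (fun k => Gi k i * (if Nat.eqb k j then 1 else 0))).
    - rewrite fsum_delta' by auto. reflexivity.
    - intros k _; reflexivity. }
  assert (E2 : fsum p (fun k => Gi k i * idm k j) =
               fsum p (fun l => (fsum p (fun k => G l k * Gi k i)) * Gi l j)).
  { rewrite (fsum_ext p (fun k => Gi k i * idm k j)
       (fun k => Gi k i * fsum p (fun l => G k l * Gi l j))).
    - rewrite (fsum_ext p (fun k => Gi k i * fsum p (fun l => G k l * Gi l j))
         (fun k => fsum p (fun l => Gi k i * G k l * Gi l j))).
      + rewrite fsum_swap. apply fsum_ext; intros l Hl. rewrite <- fsum_scalr.
        apply fsum_ext; intros k Hk. rewrite (HS k l) by auto. ring.
      + intros k Hk. rewrite <- fsum_scal. apply fsum_ext; intros; ring.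
    - intros k Hk. destruct (HI k j Hk Hj) as [H1 _]. unfold mmul in H1. rewrite H1. reflexivity. }
  rewrite E1, E2.
  rewrite (fsum_ext p _ (fun l => idm l i * Gi l j)).
  - unfold idm. rewrite (fsum_ext p _ (fun l => (if Nat.eqb i l then 1 else 0) * Gi l j)).
    + rewrite fsum_delta by auto. reflexivity.
    + intros l _. destruct (Nat.eqb_spec l i); destruct (Nat.eqb_spec i l); try lia; ring.
  - intros l Hl. destruct (HI l i Hl Hi) as [H1 _]. unfold mmul in H1. rewrite H1. reflexivity.
Qed.

Definition mv p (A : mat) (v : vec) : vec := fun r => fsum p (fun q => A r q * v q).

(* quad Gi v = quad G (Gi v) and bil G v (Gi v) = sq v *)
Lemma quad_inv_lower p (G Gi : mat) v : symmetric p G -> pos_def p G -> is_inverse p G Gi ->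
  sq p v <= (1 + asum p G) * quad p Gi v.
Proof.
  intros HS HP HI.
  pose proof (inv_sym p G Gi HS HI) as HSi.
  set (u := mv p Gi v).
  assert (Hgu : forall r, (r < p)%nat -> mv p G u r = v r).
  { intros r Hr. unfold mv, u, mv.
    rewrite (fsum_ext p _ (fun q => fsum p (fun s => G r q * Gi q s * v s))).
    - rewrite fsum_swap. rewrite (fsum_ext p _ (fun s => idm r s * v s)).
      + unfold idm. rewrite fsum_delta by auto. reflexivity.
      + intros s Hs. destruct (HI r s Hr Hs) as [H1 _]. unfold mmul in H1.
        rewrite <- H1, <- fsum_scalr. apply fsum_ext; intros; ring.
    - intros q Hq. rewrite <- fsum_scal. apply fsum_ext; intros; ring. }
  assert (Eq1 : quad p Gi v = bil p G u u).
  { unfold quad, bil. transitivity (fsum p (fun r => v r * u r)).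
    - apply fsum_ext; intros r Hr. unfold u, mv. rewrite <- fsum_scal. apply fsum_ext; intros; ring.
    - apply fsum_ext; intros r Hr. rewrite <- (Hgu r Hr). unfold mv at 1.
      rewrite <- fsum_scalr. apply fsum_ext; intros; ring. }
  assert (Eq2 : sq p v = bil p G v u).
  { unfold sq, bil. apply fsum_ext; intros r Hr.
    rewrite (fsum_ext p _ (fun j => v r * (G r j * u j))) by (intros; ring).
    rewrite fsum_scal. change (fsum p (fun j => G r j * u j)) with (mv p G u r).
    rewrite Hgu by auto. ring. }
  assert (Hq : quad p Gi v = quad p G u) by (rewrite Eq1; reflexivity).
  pose proof (bil_CS p G v u HS HP) as CS.
  fold (quad p G u) in *.
  replace (bil p G u u) with (quad p G u) in Eq1 by reflexivity.
  rewrite <- Eq2 in CS.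
  pose proof (quad_upper p G v) as QU.
  pose proof (sq_nonneg p v). pose proof (asum_nonneg p G).
  pose proof (posdef_nonneg p G u HP).
  rewrite Hq.
  destruct (Req_dec (sq p v) 0) as [Z|Z]; [rewrite Z; nra|].
  assert (sq p v ^ 2 <= asum p G * sq p v * quad p G u) by (pose proof (posdef_nonneg p G v HP); nra).
  assert (sq p v <= asum p G * quad p G u) by nra.
  nra.
Qed.

Definition frob2 p n (W : mat) := fsum p (fun i => fsum n (fun j => W i j ^ 2)).
Definition Qf p n (Gi W : mat) := fsum n (fun j => quad p Gi (fun r => W r j)).

Lemma frob2_nonneg p n W : 0 <= frob2 p n W.
Proof. apply fsum_nonneg; intros; apply fsum_nonneg; intros; apply pow2_ge_0. Qed.

Lemma frob_sq p n W : frob p n W ^ 2 = frob2 p n W.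
Proof. unfold frob. simpl. rewrite Rmult_1_r. apply sqrt_sqrt. apply frob2_nonneg. Qed.

Lemma frob_nonneg p n W : 0 <= frob p n W.
Proof. apply sqrt_pos. Qed.

Lemma frob2_cols p n W : frob2 p n W = fsum n (fun j => sq p (fun r => W r j)).
Proof. unfold frob2, sq. apply fsum_swap. Qed.

Lemma V1_Qf p n Gi W : V1 p n Gi W = / 2 * Qf p n Gi W.
Proof.
  unfold V1, Qf, trace, mmul, mtr, quad. f_equal. apply fsum_ext; intros j _.
  apply fsum_ext; intros r _. rewrite <- fsum_scal. apply fsum_ext; intros; ring.
Qed.

Lemma V1_upper p n Gi W : V1 p n Gi W <= / 2 * asum p Gi * frob2 p n W.
Proof.
  rewrite V1_Qf, frob2_cols.
  assert (Qf p n Gi W <= asum p Gi * fsum n (fun j => sq p (fun r => W r j))).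
  { unfold Qf. rewrite <- fsum_scal. apply fsum_le; intros j _. apply quad_upper. }
  lra.
Qed.

Lemma V1_lower p n G Gi W : symmetric p G -> pos_def p G -> is_inverse p G Gi ->
  frob2 p n W <= 2 * (1 + asum p G) * V1 p n Gi W.
Proof.
  intros HS HP HI. rewrite V1_Qf, frob2_cols. unfold Qf.
  replace (2 * (1 + asum p G) * (/ 2 * fsum n (fun j => quad p Gi (fun r => W r j))))
    with ((1 + asum p G) * fsum n (fun j => quad p Gi (fun r => W r j))) by field.
  rewrite <- fsum_scal. apply fsum_le; intros j _. apply quad_inv_lower; auto.
Qed.

Lemma V1_nonneg p n G Gi W : symmetric p G -> pos_def p G -> is_inverse p G Gi -> 0 <= V1 p n Gi W.
Proof.
  intros HS HP HI. rewrite V1_Qf. unfold Qf.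
  assert (0 <= fsum n (fun j => quad p Gi (fun r => W r j))).
  { apply fsum_nonneg; intros j _.
    pose proof (quad_inv_lower p G Gi (fun r => W r j) HS HP HI).
    pose proof (sq_nonneg p (fun r => W r j)). pose proof (asum_nonneg p G).
    destruct (Rle_or_lt 0 (quad p Gi (fun r => W r j))); auto. nra. }
  lra.
Qed.

Lemma fsum_deriv N (f : nat -> R -> R) d t :
  (forall i, (i < N)%nat -> derivable_pt_lim (f i) t (d i)) ->
  derivable_pt_lim (fun s => fsum N (fun i => f i s)) t (fsum N d).
Proof.
  induction N as [|N IH]; intros H; simpl.
  - apply derivable_pt_lim_const.
  - apply (derivable_pt_lim_plus (fun s => fsum N (fun i => f i s)) (f N)).
    + apply IH; intros; apply H; lia.
    + apply H; lia.
Qed.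

Lemma deriv_eq f t l l' : derivable_pt_lim f t l -> l = l' -> derivable_pt_lim f t l'.
Proof. intros H ->; auto. Qed.

Lemma V1_deriv p n Gi (W : R -> mat) (D : mat) t : symmetric p Gi ->
  (forall i j, (i < p)%nat -> (j < n)%nat -> derivable_pt_lim (fun s => W s i j) t (D i j)) ->
  derivable_pt_lim (fun s => V1 p n Gi (W s)) t
    (fsum n (fun j => fsum p (fun r => fsum p (fun q => W t r j * Gi r q * D q j)))).
Proof.
  intros HS HD. unfold V1, trace, mmul, mtr.
  eapply deriv_eq.
  - apply (derivable_pt_lim_scal (fun s => fsum n (fun j => fsum p (fun r =>
       W s r j * fsum p (fun q => Gi r q * W s q j))))).
    apply fsum_deriv; intros j Hj. apply fsum_deriv; intros r Hr.
    apply (derivable_pt_lim_mult (fun s => W s r j) (fun s => fsum p (fun q => Gi r q * W s q j))).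
    + apply HD; auto.
    + apply fsum_deriv; intros q Hq.
      apply (derivable_pt_lim_scal (fun s => W s q j)). apply HD; auto.
  - rewrite <- fsum_scal. apply fsum_ext; intros j Hj.
    rewrite fsum_plus.
    assert (E : fsum p (fun r => D r j * fsum p (fun q => Gi r q * W t q j)) =
                fsum p (fun r => fsum p (fun q => W t r j * Gi r q * D q j))).
    { rewrite (fsum_ext p _ (fun r => fsum p (fun q => D r j * Gi r q * W t q j))).
      - rewrite fsum_swap. apply fsum_ext; intros r Hr; apply fsum_ext; intros q Hq.
        rewrite (HS q r) by auto. ring.
      - intros r _. rewrite <- fsum_scal. apply fsum_ext; intros; ring. }
    rewrite E.
    assert (E2 : fsum p (fun r => W t r j * fsum p (fun q => Gi r q * D q j)) =
                 fsum p (fun r => fsum p (fun q => W t r j * Gi r q * D q j))).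
    { apply fsum_ext; intros r _. rewrite <- fsum_scal. apply fsum_ext; intros; ring. }
    rewrite E2. field.
Qed.

Lemma frob_CS p n (A B : mat) :
  Rabs (fsum p (fun i => fsum n (fun j => A i j * B i j))) <= frob p n A * frob p n B.
Proof.
  set (S := fsum p (fun i => fsum n (fun j => A i j * B i j))).
  assert (H : S ^ 2 <= frob2 p n A * frob2 p n B).
  { apply discr; [apply frob2_nonneg|]. intros s.
    pose proof (frob2_nonneg p n (fun i j => A i j + s * B i j)) as H.
    replace (frob2 p n (fun i j => A i j + s * B i j)) with
      (frob2 p n A + 2 * S * s + frob2 p n B * s ^ 2) in H; auto.
    unfold frob2, S. symmetry.
    rewrite (fsum_ext p (fun i => fsum n (fun j => (A i j + s*B i j)^2))
       (fun i => fsum n (fun j => A i j^2) + 2*s*fsum n (fun j => A i j * B i j) + s^2 * fsum n (fun j => B i j ^2))).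
    - rewrite !fsum_plus, !fsum_scal. ring.
    - intros i _. rewrite <- !fsum_scal, <- !fsum_plus. apply fsum_ext; intros; ring. }
  rewrite <- !frob_sq in H.
  pose proof (frob_nonneg p n A). pose proof (frob_nonneg p n B).
  rewrite <- (pow2_abs S) in H.
  pose proof (Rabs_pos S).
  destruct (Rle_or_lt (Rabs S) (frob p n A * frob p n B)) as [|Hlt]; auto.
  assert ((frob p n A * frob p n B) ^ 2 < Rabs S ^ 2).
  { assert (0 <= frob p n A * frob p n B) by (apply Rmult_le_pos; auto). simpl; nra. }
  nra.
Qed.

Lemma mono_nil (f : R -> R) a b : a < b ->
  (forall x, a <= x <= b -> continuity_pt f x) ->
  (forall x, a < x < b -> exists d, derivable_pt_lim f x d /\ d <= 0) ->
  f b <= f a.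
Proof.
  intros Hab Hc Hd.
  set (df := fun x => epsilon (inhabits 0) (fun d => derivable_pt_lim f x d /\ d <= 0)).
  assert (Hdf : forall x, a < x < b -> derivable_pt_lim f x (df x) /\ df x <= 0).
  { intros x Hx. unfold df. apply (epsilon_spec (inhabits 0) (fun d => derivable_pt_lim f x d /\ d <= 0)).
    apply Hd; auto. }
  set (pr1 := fun c (P : a < c < b) => exist (fun l => derivable_pt_abs f c l) (df c) (proj1 (Hdf c P))).
  set (pr2 := fun c (P : a < c < b) => derivable_pt_id c).
  destruct (MVT f id a b pr1 pr2 Hab Hc) as [c [P HM]].
  - intros; apply derivable_continuous_pt, derivable_pt_id.
  - unfold pr2 in HM. rewrite derive_pt_id in HM.
    assert (E : derive_pt f c (pr1 c P) = df c) by reflexivity.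
    rewrite E in HM. unfold id in HM. destruct (Hdf c P). nra.
Qed.

Lemma mono_abs (L : list R) : forall (f : R -> R) a b, a <= b ->
  (forall x, a <= x <= b -> continuity_pt f x) ->
  (forall x, a < x < b -> ~ In x L -> exists d, derivable_pt_lim f x d /\ d <= 0) ->
  f b <= f a.
Proof.
  induction L as [|c L IH]; intros f a b Hab Hc Hd.
  - destruct (Req_dec a b) as [->|Hne]; [lra|].
    apply mono_nil; [lra|auto|]. intros x Hx; apply Hd; auto.
  - destruct (Rlt_dec a c) as [Hac|Hac]; [destruct (Rlt_dec c b) as [Hcb|Hcb]|].
    + assert (f c <= f a).
      { apply IH; [lra| intros; apply Hc; lra|]. intros x Hx Hn. apply Hd; [lra|].
        intros [E|E]; [lra|auto]. }
      assert (f b <= f c).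
      { apply IH; [lra| intros; apply Hc; lra|]. intros x Hx Hn. apply Hd; [lra|].
        intros [E|E]; [lra|auto]. }
      lra.
    + apply IH; auto. intros x Hx Hn. apply Hd; auto. intros [E|E]; [lra|auto].
    + apply IH; auto. intros x Hx Hn. apply Hd; auto. intros [E|E]; [lra|auto].
Qed.

Definition clamp a b y := Rmax a (Rmin b y).

Lemma clamp_in a b y : a <= b -> a <= clamp a b y <= b.
Proof. intros. unfold clamp, Rmax, Rmin. repeat destruct Rle_dec; lra. Qed.

Lemma clamp_id a b y : a <= y <= b -> clamp a b y = y.
Proof. intros. unfold clamp, Rmax, Rmin. repeat destruct Rle_dec; lra. Qed.

Lemma clamp_lip a b x y : a <= x <= b -> Rabs (clamp a b y - x) <= Rabs (y - x).
Proof. intros. unfold clamp, Rmax, Rmin. repeat destruct Rle_dec; unfold Rabs; repeat destruct Rcase_abs; lra. Qed.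

Definition rel_cont (f : R -> R) a b := forall x, a <= x <= b -> forall eps, 0 < eps ->
  exists delta, 0 < delta /\ forall y, a <= y <= b -> Rabs (y - x) < delta -> Rabs (f y - f x) < eps.

Lemma deriv_loc (f g : R -> R) x d a b : a < x < b -> (forall y, a < y < b -> f y = g y) ->
  derivable_pt_lim f x d -> derivable_pt_lim g x d.
Proof.
  intros Hx Heq H eps Heps. destruct (H eps Heps) as [del Hdel].
  set (m := Rmin del (Rmin (x - a) (b - x))).
  assert (Hm : 0 < m) by (unfold m; repeat apply Rmin_pos; try lra; apply (cond_pos del)).
  exists (mkposreal m Hm). intros h Hh Hhm. simpl in Hhm.
  assert (Hh1 : Rabs h < del) by (eapply Rlt_le_trans; [exact Hhm| apply Rmin_l]).
  assert (Hh2 : Rabs h < Rmin (x - a) (b - x)) by (eapply Rlt_le_trans; [exact Hhm| apply Rmin_r]).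
  assert (Hxa := Rmin_l (x - a) (b - x)). assert (Hxb := Rmin_r (x - a) (b - x)).
  rewrite <- (Heq x) by lra. rewrite <- (Heq (x + h)).
  - apply Hdel; auto.
  - unfold Rabs in Hh2; destruct Rcase_abs; lra.
Qed.

Lemma mono_rel (L : list R) (f : R -> R) a b : a <= b -> rel_cont f a b ->
  (forall x, a < x < b -> ~ In x L -> exists d, derivable_pt_lim f x d /\ d <= 0) ->
  f b <= f a.
Proof.
  intros Hab Hc Hd.
  set (g := fun y => f (clamp a b y)).
  assert (Eg : forall y, a <= y <= b -> g y = f y) by (intros; unfold g; rewrite clamp_id; auto).
  rewrite <- (Eg a), <- (Eg b) by lra.
  apply (mono_abs L g a b Hab).
  - intros x Hx eps Heps. destruct (Hc x Hx eps Heps) as [del [Hdel H]].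
    exists del. split; auto. intros y [_ Hy]. simpl in *. unfold R_dist in *.
    unfold g. rewrite (clamp_id a b x) by auto. apply H.
    + apply clamp_in; auto.
    + eapply Rle_lt_trans; [apply clamp_lip; auto| auto].
  - intros x Hx Hn. destruct (Hd x Hx Hn) as [d [H1 H2]]. exists d. split; auto.
    apply (deriv_loc f g x d a b Hx); auto. intros; symmetry; apply Eg; lra.
Qed.

Lemma cont_rel (f : R -> R) a b : (forall x, a <= x <= b -> continuity_pt f x) -> rel_cont f a b.
Proof.
  intros H x Hx eps Heps. destruct (H x Hx eps Heps) as [del [Hdel Hd]].
  exists del; split; auto. intros y Hy Hyx.
  destruct (Req_dec y x) as [->|Hne]; [rewrite Rminus_diag, Rabs_R0; lra|].
  apply (Hd y). split; [split; [exact I| auto]| exact Hyx].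
Qed.

Lemma part_cover mm (s : nat -> R) : (forall i, (i < mm)%nat -> s i < s (S i)) ->
  forall x, s 0%nat <= x <= s mm ->
  (exists i, (i <= mm)%nat /\ x = s i) \/ (exists i, (i < mm)%nat /\ s i < x < s (S i)).
Proof.
  induction mm as [|mm IH]; intros Hs x Hx.
  - left; exists 0%nat; split; [lia|lra].
  - destruct (Rle_dec x (s mm)) as [Hle|Hgt].
    + assert (s 0%nat <= s mm).
      { clear IH Hx Hle. induction mm; [lra|]. assert (s mm < s (S mm)) by (apply Hs; lia).
        assert (s 0%nat <= s mm) by (apply IHmm; intros; apply Hs; lia). lra. }
      destruct (IH (fun i Hi => Hs i ltac:(lia)) x ltac:(lra)) as [[i [Hi E]]|[i [Hi E]]].
      * left; exists i; split; [lia|auto].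
      * right; exists i; split; [lia|auto].
    + destruct (Req_dec x (s (S mm))) as [E|E].
      * left; exists (S mm); split; [lia|auto].
      * right; exists mm; split; [lia|]. lra.
Qed.

Lemma pc_list f T : 0 < T -> piecewise_continuous f ->
  exists L, forall t, 0 < t < T -> ~ In t L -> continuity_pt f t.
Proof.
  intros HT Hpc. destruct (Hpc T HT) as [mm [s [H0 [HmT Hp]]]].
  exists (map s (seq 0 (S mm))). intros t Ht Hn.
  assert (Hs : forall i, (i < mm)%nat -> s i < s (S i)) by (intros i Hi; apply (Hp i Hi)).
  destruct (part_cover mm s Hs t ltac:(lra)) as [[i [Hi E]]|[i [Hi E]]].
  - exfalso; apply Hn. rewrite E. apply in_map. apply in_seq. lia.
  - destruct (Hp i Hi) as [_ [Hc _]]. apply Hc; auto.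
Qed.

Lemma pc_vec_list m f T : 0 < T -> pc_vec m f ->
  exists L, forall t, 0 < t < T -> ~ In t L -> cont_at_vec m f t.
Proof.
  intros HT. induction m as [|m IH]; intros Hpc.
  - exists nil. intros t _ _ i Hi; lia.
  - destruct IH as [L1 HL1]. { intros i Hi; apply Hpc; lia. }
    destruct (pc_list (fun t => f t m) T HT) as [L2 HL2]. { apply Hpc; lia. }
    exists (L1 ++ L2). intros t Ht Hn i Hi.
    destruct (Nat.eq_dec i m) as [->|Hne].
    + apply HL2; auto. intro; apply Hn; apply in_or_app; auto.
    + apply HL1; auto; [|lia]. intro; apply Hn; apply in_or_app; auto.
Qed.

Lemma clamp_lip2 a b x y : a <= b -> Rabs (clamp a b y - clamp a b x) <= Rabs (y - x).
Proof. intros. unfold clamp, Rmax, Rmin. repeat destruct Rle_dec; unfold Rabs; repeat destruct Rcase_abs; lra. Qed.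

Lemma rel_cont_clamp f a b : a <= b -> rel_cont f a b ->
  forall x, continuity_pt (fun y => f (clamp a b y)) x.
Proof.
  intros Hab Hc x eps Heps.
  destruct (Hc (clamp a b x) (clamp_in a b x Hab) eps Heps) as [del [Hdel H]].
  exists del; split; auto. intros y [_ Hy]. simpl in *. unfold R_dist in *.
  apply H; [apply clamp_in; auto|]. eapply Rle_lt_trans; [apply clamp_lip2; auto|auto].
Qed.

Lemma clamp_rel_cont (F f : R -> R) a b : (forall x, a <= x <= b -> continuity_pt F x) ->
  (forall y, a <= y <= b -> F y = f y) -> rel_cont f a b.
Proof.
  intros HF Heq x Hx eps Heps. destruct (cont_rel F a b HF x Hx eps Heps) as [del [Hd H]].
  exists del; split; auto. intros y Hy Hyx. rewrite <- (Heq y), <- (Heq x) by auto. auto.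
Qed.

Lemma rel_cont_plus f g a b : a <= b -> rel_cont f a b -> rel_cont g a b -> rel_cont (fun s => f s + g s) a b.
Proof.
  intros Hab Hf Hg. apply (clamp_rel_cont (fun y => f (clamp a b y) + g (clamp a b y))).
  - intros x _. apply continuity_pt_plus; apply rel_cont_clamp; auto.
  - intros y Hy. rewrite clamp_id; auto.
Qed.

Lemma rel_cont_mult f g a b : a <= b -> rel_cont f a b -> rel_cont g a b -> rel_cont (fun s => f s * g s) a b.
Proof.
  intros Hab Hf Hg. apply (clamp_rel_cont (fun y => f (clamp a b y) * g (clamp a b y))).
  - intros x _. apply continuity_pt_mult; apply rel_cont_clamp; auto.
  - intros y Hy. rewrite clamp_id; auto.
Qed.

Lemma rel_cont_cont f a b : (forall x, continuity_pt f x) -> rel_cont f a b.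
Proof. intros H. apply cont_rel; auto. Qed.

Lemma rel_cont_const c a b : rel_cont (fun _ => c) a b.
Proof. apply rel_cont_cont. intros; apply continuity_pt_const. intros u v; reflexivity. Qed.

Lemma rel_cont_fsum N (f : nat -> R -> R) a b : a <= b -> (forall i, (i < N)%nat -> rel_cont (f i) a b) ->
  rel_cont (fun s => fsum N (fun i => f i s)) a b.
Proof.
  induction N as [|N IH]; intros Hab H; simpl.
  - apply rel_cont_const.
  - apply (rel_cont_plus (fun s => fsum N (fun i => f i s)) (f N)); auto.
Qed.

Lemma rel_cont_nonneg f b : cont_nonneg f -> rel_cont f 0 b.
Proof.
  intros H x Hx eps Heps. destruct (H x (proj1 Hx) eps Heps) as [del [Hd Hdel]].
  exists del; split; auto. intros y Hy Hyx. apply Hdel; auto. lra.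
Qed.

Lemma rel_cont_exp c a b : rel_cont (fun s => exp (s * c)) a b.
Proof.
  apply rel_cont_cont. intros x. apply (continuity_pt_comp (fun s => s * c) exp).
  - apply continuity_pt_mult; [apply derivable_continuous_pt, derivable_pt_id| apply continuity_pt_const; intros ? ?; reflexivity].
  - apply derivable_continuous_pt, derivable_pt_exp.
Qed.

Lemma deriv_exp_lin c t : derivable_pt_lim (fun s => exp (s * c)) t (c * exp (t * c)).
Proof.
  replace (c * exp (t * c)) with (exp (t * c) * c) by ring.
  apply (derivable_pt_lim_comp (fun s => s * c) exp).
  - intros eps Heps. exists (mkposreal eps Heps). intros h Hh _. simpl.
    replace (((t + h) * c - t * c) / h - c) with 0 by (field; auto). rewrite Rabs_R0; auto.
  - apply derivable_pt_lim_exp.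
Qed.

Definition good_ode (g u : R -> R) k := forall T, 0 < T -> exists L, forall t, 0 < t < T -> ~ In t L ->
  exists d, derivable_pt_lim g t d /\ k * d + g t = u t.

Lemma ode_upper g u k c : 0 < k -> (forall b, rel_cont g 0 b) -> (forall t, 0 <= t -> u t <= c) ->
  g 0 <= c -> good_ode g u k -> forall t, 0 <= t -> g t <= c.
Proof.
  intros Hk Hc Hu H0 Hg t Ht.
  destruct (Req_dec t 0) as [->|Htn]; auto.
  destruct (Hg (t + 1) ltac:(lra)) as [L HL].
  set (h := fun s => (g s - c) * exp (s * / k)).
  assert (Hm : h t <= h 0).
  { apply (mono_rel L h 0 t); [lra| |].
    - unfold h. apply rel_cont_mult; [lra| |apply rel_cont_exp].
      apply (rel_cont_plus g (fun _ => - c)); [lra|auto|apply rel_cont_const].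
    - intros s Hs Hn. destruct (HL s ltac:(lra) Hn) as [d [Hd Hkd]].
      exists ((d - 0) * exp (s * / k) + (g s - c) * (/ k * exp (s * / k))). split.
      + apply (derivable_pt_lim_mult (fun s => g s - c) (fun s => exp (s * / k))).
        * apply (derivable_pt_lim_minus g (fun _ => c)); auto. apply derivable_pt_lim_const.
        * apply deriv_exp_lin.
      + assert (E : (d - 0) * exp (s * / k) + (g s - c) * (/ k * exp (s * / k))
                  = exp (s * / k) * / k * (k * d + g s - c)) by (field; lra).
        rewrite E, Hkd. assert (0 < exp (s * / k)) by apply exp_pos.
        assert (0 < / k) by (apply Rinv_0_lt_compat; lra).
        assert (u s - c <= 0) by (pose proof (Hu s ltac:(lra)); lra).
        assert (0 < exp (s * / k) * / k) by nra. nra. }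
  unfold h in Hm. rewrite Rmult_0_l, exp_0, Rmult_1_r in Hm.
  assert (0 < exp (t * / k)) by apply exp_pos.
  assert (1 <= exp (t * / k)).
  { rewrite <- exp_0. destruct (Req_dec (t * / k) 0) as [E|E]; [rewrite E; lra|].
    left; apply exp_increasing. assert (0 < / k) by (apply Rinv_0_lt_compat; lra). nra. }
  nra.
Qed.

Lemma ode_lower g u k c : 0 < k -> (forall b, rel_cont g 0 b) -> (forall t, 0 <= t -> c <= u t) ->
  c <= g 0 -> good_ode g u k -> forall t, 0 <= t -> c <= g t.
Proof.
  intros Hk Hc Hu H0 Hg t Ht.
  assert (- g t <= - c); [|lra].
  apply (ode_upper (fun s => - g s) (fun s => - u s) k (- c)); auto.
  - intros b. apply (clamp_rel_cont (fun y => - g (clamp 0 b y))).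
    + intros x Hx. apply continuity_pt_opp. apply rel_cont_clamp; auto. lra.
    + intros y Hy. rewrite clamp_id; auto.
  - intros s Hs. pose proof (Hu s Hs). lra.
  - lra.
  - intros T HT. destruct (Hg T HT) as [L HL]. exists L. intros s Hs Hn.
    destruct (HL s Hs Hn) as [d [Hd E]]. exists (- d). split.
    + apply derivable_pt_lim_opp; auto.
    + lra.
Qed.

Module IntLemmas.
From Coquelicot Require Import Coquelicot.

Lemma is_int_unique f a b u v : is_integral f a b u -> is_integral f a b v -> u = v.
Proof. intros [p1 <-] [p2 <-]. apply RiemannInt_P5. Qed.

Lemma is_int_plus f g a b u v l : is_integral f a b u -> is_integral g a b v ->
  is_integral (fun x => f x + l * g x) a b (u + l * v).
Proof.
  intros [p1 H1] [p2 H2]. exists (RiemannInt_P10 l p1 p2).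
  rewrite RiemannInt_P13 with (pr1 := p1) (pr2 := p2). subst; reflexivity.
Qed.

Lemma is_int_zero a b : is_integral (fun _ => 0) a b 0.
Proof.
  exists (RiemannInt_P14 a b 0). transitivity (0 * (b - a)); [apply RiemannInt_P15| ring].
Qed.

Lemma is_int_fsum N (f : nat -> R -> R) (c v : nat -> R) a b :
  (forall i, (i < N)%nat -> is_integral (f i) a b (v i)) ->
  is_integral (fun s => fsum N (fun i => c i * f i s)) a b (fsum N (fun i => c i * v i)).
Proof.
  induction N as [|N IH]; intros H; simpl.
  - apply is_int_zero.
  - apply is_int_plus; [apply IH; intros; apply H; lia| apply H; lia].
Qed.

Lemma is_int_open_ext f g a b u : a <= b -> is_integral f a b u -> Riemann_integrable g a b ->
  (forall x, a < x < b -> f x = g x) -> is_integral g a b u.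
Proof.
  intros Hab [p1 H1] p2 Heq. exists p2. rewrite <- H1. symmetry. apply RiemannInt_P18; auto.
Qed.

Lemma is_int_eq_open f g a b u v : a <= b -> is_integral f a b u -> is_integral g a b v ->
  (forall x, a < x < b -> f x = g x) -> u = v.
Proof.
  intros Hab [p1 H1] [p2 H2] Heq. subst. apply RiemannInt_P18; auto.
Qed.

Lemma is_int_abs_le f g a b u v : a <= b -> is_integral f a b u -> is_integral g a b v ->
  (forall x, a < x < b -> Rabs (f x) <= g x) -> Rabs u <= v.
Proof.
  intros Hab [p1 H1] [p2 H2] Hle. subst.
  eapply Rle_trans; [apply (RiemannInt_P17 p1 (RiemannInt_P16 p1) Hab)|].
  apply RiemannInt_P19; auto.
Qed.

Lemma exp_int l t : 0 < l -> 0 <= t ->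
  is_integral (fun s => exp (- l * (t - s))) 0 t ((1 - exp (- l * t)) / l).
Proof.
  intros Hl Ht.
  assert (H : is_RInt (fun s => exp (- l * (t - s))) 0 t
              (minus ((fun s => exp (- l * (t - s)) / l) t) ((fun s => exp (- l * (t - s)) / l) 0))).
  { apply (@is_RInt_derive R_CompleteNormedModule (fun s => exp (- l * (t - s)) / l) (fun s => exp (- l * (t - s)))).
    - intros x _. auto_derive; auto. replace (t + - x) with (t - x) by ring. field. lra.
    - intros x _. apply continuity_pt_filterlim.
      apply (continuity_pt_comp (fun s => - l * (t - s)) exp).
      + apply continuity_pt_mult; [apply continuity_pt_const; intros ? ?; reflexivity|].
        apply continuity_pt_minus; [apply continuity_pt_const; intros ? ?; reflexivity|].
        apply derivable_continuous_pt, derivable_pt_id.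
      + apply derivable_continuous_pt, derivable_pt_exp. }
  assert (Hex : ex_RInt (fun s => exp (- l * (t - s))) 0 t) by (eexists; eauto).
  exists (ex_RInt_Reals_0 _ _ _ Hex). rewrite <- RInt_Reals.
  rewrite (is_RInt_unique _ _ _ _ H). unfold minus, plus, opp; simpl.
  replace (- l * (t - t)) with 0 by ring. rewrite exp_0. replace (- l * (t - 0)) with (- l * t) by ring.
  field. lra.
Qed.

Lemma exp_int_bound l t c f u : 0 < l -> 0 <= t -> 0 <= c -> is_integral f 0 t u ->
  (forall s, 0 < s < t -> Rabs (f s) <= c * exp (- l * (t - s))) -> Rabs u <= c / l.
Proof.
  intros Hl Ht Hc Hf Hb.
  assert (Hi : is_integral (fun s => 0 + c * exp (- l * (t - s))) 0 t (0 + c * ((1 - exp (- l * t)) / l))).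
  { apply is_int_plus; [apply is_int_zero| apply exp_int; auto]. }
  eapply Rle_trans; [apply (is_int_abs_le f _ 0 t u _ Ht Hf Hi)|].
  - intros s Hs. rewrite Rplus_0_l. auto.
  - assert (0 < exp (- l * t)) by apply exp_pos.
    assert (0 < / l) by (apply Rinv_0_lt_compat; lra).
    assert (0 <= c * exp (- l * t) * / l) by (apply Rmult_le_pos; [apply Rmult_le_pos|]; lra).
    unfold Rdiv. replace (0 + c * ((1 - exp (- l * t)) * / l)) with (c * / l - c * exp (- l * t) * / l) by ring.
    lra.
Qed.

End IntLemmas.
Import IntLemmas.

Lemma deriv_cont V T1 : (forall t, T1 <= t -> exists d, derivable_pt_lim V t d) ->
  forall x, T1 <= x -> continuity_pt V x.
Proof.
  intros H x Hx. destruct (H x Hx) as [d Hd].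
  apply derivable_continuous_pt. exists d. exact Hd.
Qed.

Lemma lyap_decay (V f : R -> R) T1 a C : 0 < a -> 0 <= C ->
  (forall t, T1 <= t -> exists d, derivable_pt_lim V t d /\ d <= - a * V t) ->
  (forall t, 0 <= V t) -> (forall t, 0 <= f t) -> (forall t, f t ^ 2 <= C * V t) ->
  forall e, 0 < e -> exists T, forall t, T <= t -> f t < e.
Proof.
  intros Ha HC Hd HV Hf Hfv e He.
  assert (Hc : forall x, T1 <= x -> continuity_pt V x).
  { apply deriv_cont. intros t Ht. destruct (Hd t Ht) as [d [H _]]; eauto. }
  set (X := C * V T1).
  assert (HX : 0 <= X) by (unfold X; pose proof (HV T1); nra).
  exists (T1 + X / (a * e ^ 2)). intros t Ht.
  assert (Hxa : 0 <= X / (a * e ^ 2)).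
  { unfold Rdiv. apply Rmult_le_pos; auto. left; apply Rinv_0_lt_compat. apply Rmult_lt_0_compat; [lra| apply pow_lt; lra]. }
  set (h := fun s => V s * (1 + a * (s - T1))).
  assert (Hm : h t <= h T1).
  { apply (mono_abs nil h T1 t); [lra| |].
    - intros x Hx. unfold h. apply continuity_pt_mult; [apply Hc; lra|].
      apply continuity_pt_plus; [apply continuity_pt_const; intros ? ?; reflexivity|].
      apply continuity_pt_mult; [apply continuity_pt_const; intros ? ?; reflexivity|].
      apply continuity_pt_minus; [apply derivable_continuous_pt, derivable_pt_id|].
      apply continuity_pt_const; intros ? ?; reflexivity.
    - intros x Hx _. destruct (Hd x ltac:(lra)) as [d [Hd1 Hd2]].
      exists (d * (1 + a * (x - T1)) + V x * (0 + a * (1 - 0))). split.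
      + apply (derivable_pt_lim_mult V (fun s => 1 + a * (s - T1))); auto.
        apply (derivable_pt_lim_plus (fun _ => 1) (fun s => a * (s - T1))).
        * apply derivable_pt_lim_const.
        * apply (derivable_pt_lim_scal (fun s => s - T1)).
          apply (derivable_pt_lim_minus id (fun _ => T1)); [apply derivable_pt_lim_id| apply derivable_pt_lim_const].
      + pose proof (HV x). assert (0 <= 1 + a * (x - T1)) by nra.
        assert (d * (1 + a * (x - T1)) <= - a * V x * (1 + a * (x - T1))) by nra.
        assert (0 <= a * a * V x * (x - T1)).
        { apply Rmult_le_pos; [apply Rmult_le_pos; [nra|auto]|lra]. }
        nra. }
  unfold h in Hm. replace (T1 - T1) with 0 in Hm by ring.
  rewrite Rmult_0_r, Rplus_0_r, Rmult_1_r in Hm.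
  set (D := 1 + a * (t - T1)).
  assert (HD : 1 + X / e ^ 2 <= D).
  { unfold D. assert (X / (a * e ^ 2) <= t - T1) by lra.
    assert (E : X / e ^ 2 = a * (X / (a * e ^ 2))) by (field; split; lra).
    rewrite E. nra. }
  assert (He2 : 0 < e ^ 2) by nra.
  assert (HXe : X <= X / e ^ 2 * e ^ 2) by (right; field; lra).
  assert (HDe : X < D * e ^ 2).
  { assert (X / e ^ 2 * e ^ 2 < D * e ^ 2) by nra. lra. }
  assert (Hfd : f t ^ 2 * D <= X).
  { unfold X. pose proof (Hfv t). assert (0 <= D) by nra. fold D in Hm. nra. }
  assert (f t ^ 2 < e ^ 2).
  { assert (0 < D) by nra. nra. }
  pose proof (Hf t). nra.
Qed.

Definition bUUB C c2 nu lam0 := sqrt (C * (c2 * (2 * nu / lam0) ^ 2 + 1)).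

Lemma lyap_uub (V f : R -> R) T1 C c2 nu lam0 : 0 < lam0 -> 0 < C -> 0 < c2 -> 0 <= nu ->
  (forall t, T1 <= t -> exists d, derivable_pt_lim V t d /\ d <= - lam0 * f t ^ 2 + nu * f t) ->
  (forall t, 0 <= V t) -> (forall t, 0 <= f t) -> (forall t, f t ^ 2 <= C * V t) ->
  (forall t, V t <= c2 * f t ^ 2) ->
  exists T, forall t, T <= t -> f t <= bUUB C c2 nu lam0.
Proof.
  intros Hl HC Hc2 Hnu Hd HV Hf Hfv Hvf.
  set (th := 2 * nu / lam0).
  assert (Hth : 0 <= th) by (unfold th; unfold Rdiv; apply Rmult_le_pos; [lra| left; apply Rinv_0_lt_compat; lra]).
  set (R0 := c2 * th ^ 2 + 1).
  assert (HR0 : 0 < R0) by (unfold R0; nra).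
  set (del := lam0 * R0 / (2 * c2)).
  assert (Hdel : 0 < del) by (unfold del; unfold Rdiv; apply Rmult_lt_0_compat; [nra| apply Rinv_0_lt_compat; lra]).
  assert (Hc : forall x, T1 <= x -> continuity_pt V x).
  { apply deriv_cont. intros t Ht. destruct (Hd t Ht) as [d [H _]]; eauto. }
  assert (Key : forall s, T1 <= s -> R0 <= V s -> exists d, derivable_pt_lim V s d /\ d <= - del).
  { intros s Hs HVs. destruct (Hd s Hs) as [d [Hd1 Hd2]]. exists d; split; auto.
    pose proof (Hvf s). pose proof (Hf s).
    assert (Hfs : th < f s).
    { destruct (Rlt_or_le th (f s)) as [|Hle]; auto. exfalso.
      assert (f s ^ 2 <= th ^ 2) by (apply pow_incr; lra). unfold R0 in HVs. nra. }
    assert (Hn : 2 * nu <= lam0 * f s).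
    { unfold th in Hfs. apply (Rmult_lt_compat_l lam0) in Hfs; auto.
      replace (lam0 * (2 * nu / lam0)) with (2 * nu) in Hfs by (field; lra). lra. }
    assert (Hq : - lam0 * f s ^ 2 + nu * f s <= - lam0 * f s ^ 2 / 2) by nra.
    assert (Hf2 : R0 / c2 <= f s ^ 2).
    { unfold Rdiv. apply (Rmult_le_reg_l c2); auto. rewrite <- Rmult_assoc, Rinv_r_simpl_m by lra. lra. }
    unfold del. assert (lam0 * (R0 / c2) <= lam0 * f s ^ 2) by (apply Rmult_le_compat_l; lra).
    replace (lam0 * R0 / (2 * c2)) with (lam0 * (R0 / c2) / 2) by (field; lra). lra. }
  assert (C1 : exists T, T1 <= T /\ V T < R0).
  { apply NNPP. intros Hn.
    assert (Hall : forall s, T1 <= s -> R0 <= V s).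
    { intros s Hs. destruct (Rle_or_lt R0 (V s)); auto. exfalso; apply Hn; eauto. }
    set (t := T1 + V T1 / del + 1).
    assert (Ht : T1 + V T1 / del <= t - 1) by (unfold t; lra).
    assert (HVd : 0 <= V T1 / del) by (unfold Rdiv; apply Rmult_le_pos; [apply HV| left; apply Rinv_0_lt_compat; lra]).
    assert (Hm : V t + del * t <= V T1 + del * T1).
    { apply (mono_abs nil (fun s => V s + del * s) T1 t); [lra| |].
      - intros x Hx. apply continuity_pt_plus; [apply Hc; lra|].
        apply continuity_pt_mult; [apply continuity_pt_const; intros ? ?; reflexivity|].
        apply derivable_continuous_pt, derivable_pt_id.
      - intros x Hx _. destruct (Key x ltac:(lra) (Hall x ltac:(lra))) as [d [Hd1 Hd2]].
        exists (d + del * 1). split.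
        + apply (derivable_pt_lim_plus V (fun s => del * s)); auto.
          apply (derivable_pt_lim_scal id). apply derivable_pt_lim_id.
        + lra. }
    assert (E : del * (V T1 / del) = V T1) by (field; lra).
    pose proof (Hall t ltac:(unfold t; lra)). nra. }
  destruct C1 as [T [HT HVT]].
  exists T. intros t Ht.
  assert (HVt : V t <= R0).
  { apply NNPP. intros Hn. apply Rnot_le_lt in Hn.
    set (E := fun s => T <= s <= t /\ V s <= R0).
    assert (Hb : bound E) by (exists t; intros s [Hs _]; lra).
    assert (He : exists s, E s) by (exists T; split; [lra|lra]).
    destruct (completeness E Hb He) as [s0 [Hub Hlub]].
    assert (Hs0T : T <= s0) by (apply Hub; split; [lra|lra]).
    assert (Hs0t : s0 <= t) by (apply Hlub; intros s [Hs _]; lra).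
    assert (HV0 : V s0 <= R0).
    { apply NNPP. intros Hn2. apply Rnot_le_lt in Hn2.
      destruct (Hc s0 ltac:(lra) (V s0 - R0) ltac:(lra)) as [dl [Hdl Hcl]].
      assert (Hup : forall s, E s -> s <= s0 - dl / 2).
      { intros s [Hs Hvs]. destruct (Rle_or_lt s (s0 - dl / 2)) as [|Hlt]; auto. exfalso.
        assert (s <= s0) by (apply Hub; split; auto).
        destruct (Req_dec s s0) as [->|Hne]; [lra|].
        assert (Rabs (V s - V s0) < V s0 - R0).
        { apply (Hcl s). split; [split; [exact I| auto]|]. simpl; unfold R_dist.
          rewrite Rabs_left1 by lra. lra. }
        rewrite Rabs_left1 in H0 by lra. lra. }
      assert (s0 <= s0 - dl / 2) by (apply Hlub; exact Hup). lra. }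
    assert (Hlt : s0 < t) by (destruct (Req_dec s0 t) as [->|]; lra).
    assert (Hright : forall s, s0 < s <= t -> R0 < V s).
    { intros s Hs. destruct (Rlt_or_le R0 (V s)) as [|Hle]; auto. exfalso.
      assert (s <= s0) by (apply Hub; split; [lra|auto]). lra. }
    assert (V t <= V s0).
    { apply (mono_abs nil V s0 t); [lra| intros; apply Hc; lra|].
      intros x Hx _. destruct (Key x ltac:(lra)) as [d [Hd1 Hd2]].
      - left; apply Hright; lra.
      - exists d; split; auto; lra. }
    lra. }
  unfold bUUB. fold th. fold R0.
  pose proof (Hfv t). pose proof (Hf t).
  rewrite <- (sqrt_pow2 (f t)) by auto. apply sqrt_le_1_alt. nra.
Qed.

Lemma Mx_entry p N (Pi K y1 : R -> mat) (W1 : mat) ts (Wh : mat) t r j :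
  K t r j = fsum p (fun u => W1 u j * Pi t r u) - y1 t r j ->
  (forall q, (q < N)%nat -> K (ts q) r j = fsum p (fun u => W1 u j * Pi (ts q) r u) - y1 (ts q) r j) ->
  madd (msub (mmul p (Pi t) Wh) (K t))
       (msum N (fun q => msub (mmul p (Pi (ts q)) Wh) (K (ts q)))) r j
  = - fsum p (fun u => madd (Pi t) (msum N (fun q => Pi (ts q))) r u * (W1 u j - Wh u j))
    + madd (y1 t) (msum N (fun q => y1 (ts q))) r j.
Proof.
  intros HK HKq. unfold madd, msub, mmul, msum.
  rewrite HK. rewrite (fsum_ext N _ (fun q => fsum p (fun u => Pi (ts q) r u * Wh u j) -
      (fsum p (fun u => W1 u j * Pi (ts q) r u) - y1 (ts q) r j))) by (intros q Hq; rewrite HKq; auto).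
  rewrite (fsum_ext p (fun u => (Pi t r u + fsum N (fun q => Pi (ts q) r u)) * (W1 u j - Wh u j))
     (fun u => (Pi t r u * (W1 u j - Wh u j)) + fsum N (fun q => Pi (ts q) r u * (W1 u j - Wh u j))))
     by (intros; rewrite Rmult_plus_distr_r, <- fsum_scalr; reflexivity).
  rewrite fsum_plus. rewrite fsum_swap.
  rewrite !fsum_minus.
  rewrite (fsum_ext p (fun u => Pi t r u * (W1 u j - Wh u j)) (fun u => W1 u j * Pi t r u - Pi t r u * Wh u j)) by (intros; ring).
  rewrite fsum_minus.
  rewrite (fsum_ext N (fun q => fsum p (fun u => Pi (ts q) r u * (W1 u j - Wh u j)))
     (fun q => fsum p (fun u => W1 u j * Pi (ts q) r u) - fsum p (fun u => Pi (ts q) r u * Wh u j)))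
     by (intros; rewrite <- fsum_minus; apply fsum_ext; intros; ring).
  rewrite !fsum_minus. ring.
Qed.

Lemma deriv_main p n (Gamma Ginv : mat) (Pi K y1 : R -> mat) (W1 : mat) N ts What t :
  is_inverse p Gamma Ginv -> symmetric p Ginv ->
  (forall r j, (r < p)%nat -> (j < n)%nat -> K t r j = fsum p (fun u => W1 u j * Pi t r u) - y1 t r j) ->
  (forall q r j, (q < N)%nat -> (r < p)%nat -> (j < n)%nat ->
     K (ts q) r j = fsum p (fun u => W1 u j * Pi (ts q) r u) - y1 (ts q) r j) ->
  estimator_law p n Gamma Pi K N ts What -> 0 < t ->
  derivable_pt_lim (fun s => V1 p n Ginv (msub W1 (What s))) t
     (- fsum n (fun j => quad p (madd (Pi t) (msum N (fun q => Pi (ts q)))) (fun r => W1 r j - What t r j))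
      + fsum p (fun r => fsum n (fun j => (W1 r j - What t r j) * madd (y1 t) (msum N (fun q => y1 (ts q))) r j))).
Proof.
  intros HI HS HK HKq Hlaw Ht.
  set (Mx := madd (msub (mmul p (Pi t) (What t)) (K t))
       (msum N (fun q => msub (mmul p (Pi (ts q)) (What t)) (K (ts q))))).
  eapply deriv_eq.
  - apply (V1_deriv p n Ginv (fun s => msub W1 (What s)) (mmul p Gamma Mx) t HS).
    intros i j Hi Hj. unfold msub.
    eapply deriv_eq.
    + apply (derivable_pt_lim_minus (fun _ => W1 i j) (fun s => What s i j)).
      * apply derivable_pt_lim_const.
      * apply Hlaw; auto.
    + unfold mopp. fold Mx. ring.
  -
    set (P := madd (Pi t) (msum N (fun q => Pi (ts q)))).
    set (Y := madd (y1 t) (msum N (fun q => y1 (ts q)))).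
    set (W := msub W1 (What t)).
    assert (HM : forall r j, (r < p)%nat -> (j < n)%nat ->
              Mx r j = - fsum p (fun u => P r u * W u j) + Y r j).
    { intros r j Hr Hj. unfold Mx, P, Y, W, msub. apply Mx_entry; auto. }
    transitivity (fsum n (fun j => fsum p (fun r => W r j * Mx r j))).
    + apply fsum_ext; intros j Hj. apply fsum_ext; intros r Hr.
      unfold mmul.
      rewrite (fsum_ext p _ (fun q => fsum p (fun u => W r j * Ginv r q * Gamma q u * Mx u j))).
      * rewrite fsum_swap.
        rewrite (fsum_ext p _ (fun u => (if Nat.eqb r u then 1 else 0) * (W r j * Mx u j))).
        -- rewrite (fsum_delta p r (fun u => W r j * Mx u j)) by auto. reflexivity.
        -- intros u Hu. destruct (HI r u Hr Hu) as [_ H2]. unfold mmul, idm in H2.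
           rewrite <- H2. rewrite <- fsum_scalr. apply fsum_ext; intros; ring.
      * intros q Hq. rewrite <- fsum_scal. apply fsum_ext; intros; ring.
    + rewrite (fsum_ext n _ (fun j => - quad p P (fun r => W r j) + fsum p (fun r => W r j * Y r j))).
      * rewrite fsum_plus, fsum_opp. f_equal. rewrite fsum_swap. reflexivity.
      * intros j Hj. rewrite (fsum_ext p _ (fun r => - (W r j * fsum p (fun u => P r u * W u j)) + W r j * Y r j)).
        -- rewrite fsum_plus, fsum_opp. f_equal. f_equal. unfold quad. apply fsum_ext; intros r _.
           rewrite <- fsum_scal. apply fsum_ext; intros; ring.
        -- intros r Hr. rewrite HM by auto. ring.
Qed.

Lemma comp_le_vnorm m v i : (i < m)%nat -> Rabs (v i) <= vnorm m v.
Proof.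
  intros Hi. unfold vnorm. rewrite <- sqrt_Rsqr_abs. apply sqrt_le_1_alt.
  rewrite Rsqr_pow2. apply (sq_term m v i Hi).
Qed.

Lemma Rabs_le_between x B : Rabs x <= B -> - B <= x <= B.
Proof. intros H. pose proof (RRle_abs x). pose proof (RRle_abs (- x)). rewrite Rabs_Ropp in *. lra. Qed.

Lemma filt_bound (g u : R -> R) k B : 0 < k -> cont_nonneg g -> g 0 = 0 ->
  (forall t, 0 <= t -> Rabs (u t) <= B) -> good_ode g u k -> forall t, 0 <= t -> Rabs (g t) <= B.
Proof.
  intros Hk Hc H0 Hu Hg t Ht.
  assert (HB : 0 <= B) by (pose proof (Hu 0 ltac:(lra)); pose proof (Rabs_pos (u 0)); lra).
  assert (Hrc : forall b, rel_cont g 0 b) by (intros; apply rel_cont_nonneg; auto).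
  apply Rabs_le. split.
  - apply (ode_lower g u k (- B)); auto; [|lra].
    intros s Hs. pose proof (Hu s Hs). apply Rabs_le_between in H. lra.
  - apply (ode_upper g u k B); auto; [|lra].
    intros s Hs. pose proof (Hu s Hs). apply Rabs_le_between in H. lra.
Qed.


Lemma frob_bound p n (A : mat) c : (forall r j, (r < p)%nat -> (j < n)%nat -> Rabs (A r j) <= c) ->
  frob p n A <= sqrt (INR p * (INR n * c ^ 2)).
Proof.
  intros H. unfold frob. apply sqrt_le_1_alt.
  rewrite <- fsum_const. apply fsum_le; intros r Hr. rewrite <- fsum_const. apply fsum_le; intros j Hj.
  pose proof (H r j Hr Hj). pose proof (Rabs_pos (A r j)).
  rewrite <- (pow2_abs (A r j)). apply pow_incr. lra.
Qed.

Definition nuB p n N p1 l B := sqrt (INR p * (INR n * ((INR N + 1) * (p1 * B / l)) ^ 2)).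

Theorem theorem1 (n kw1 kw2 : nat) :
  let p := (kw1 + kw2)%nat in
  forall (W1 : mat) (Phi epsT x : R -> vec) (p1 p2 : R),
  pc_vec p Phi -> pc_vec n epsT ->
  (forall t, 0 <= t -> vnorm p (Phi t) <= p1) ->
  (forall t, 0 <= t -> vnorm n (epsT t) <= p2) ->
  (* state equation  dx/dt = W1^T Phi + epsT *)
  (forall i, (i < n)%nat -> cont_nonneg (fun t => x t i)) ->
  (forall t, 0 < t -> cont_at_vec p Phi t -> cont_at_vec n epsT t ->
     forall i, (i < n)%nat ->
       derivable_pt_lim (fun s => x s i) t (mvec p (mtr W1) (Phi t) i + epsT t i)) ->
  forall (k l : R), 0 < k -> 0 < l ->
  forall (Phif xf xfd epsf : R -> vec),
  (* k dPhif/dt + Phif = Phi, Phif(0) = 0 *)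
  (forall i, (i < p)%nat -> cont_nonneg (fun t => Phif t i)) ->
  (forall i, (i < p)%nat -> Phif 0 i = 0) ->
  (forall t, 0 < t -> cont_at_vec p Phi t -> forall i, (i < p)%nat ->
     exists d, derivable_pt_lim (fun s => Phif s i) t d /\ k * d + Phif t i = Phi t i) ->
  (* k dxf/dt + xf = x, xf(0) = x(0); xfd is dxf/dt *)
  (forall i, (i < n)%nat -> cont_nonneg (fun t => xf t i)) ->
  (forall i, (i < n)%nat -> xf 0 i = x 0 i) ->
  (forall t, 0 < t -> forall i, (i < n)%nat ->
     derivable_pt_lim (fun s => xf s i) t (xfd t i) /\ k * xfd t i + xf t i = x t i) ->
  (* k depsf/dt + epsf = epsT, epsf(0) = 0 *)
  (forall i, (i < n)%nat -> cont_nonneg (fun t => epsf t i)) ->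
  (forall i, (i < n)%nat -> epsf 0 i = 0) ->
  (forall t, 0 < t -> cont_at_vec n epsT t -> forall i, (i < n)%nat ->
     exists d, derivable_pt_lim (fun s => epsf s i) t d /\ k * d + epsf t i = epsT t i) ->
  forall (Pi K y1 : R -> mat),
  (forall t, 0 <= t -> forall i j, (i < p)%nat -> (j < p)%nat ->
     is_integral (fun s => exp (- l * (t - s)) * (Phif s i * Phif s j)) 0 t (Pi t i j)) ->
  (forall t, 0 <= t -> forall i j, (i < p)%nat -> (j < n)%nat ->
     is_integral (fun s => exp (- l * (t - s)) * (Phif s i * xfd s j)) 0 t (K t i j)) ->
  (forall t, 0 <= t -> forall i j, (i < p)%nat -> (j < n)%nat ->
     is_integral (fun s => exp (- l * (t - s)) * (Phif s i * epsf s j)) 0 t (- y1 t i j)) ->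
  (* recorded times t_1..t_N  (indexed 0..N-1) *)
  forall (N : nat) (ts : nat -> R), (p <= N)%nat ->
  (forall q, (q < N)%nat -> 0 <= ts q) ->
  forall (Gamma Ginv : mat),
  symmetric p Gamma -> pos_def p Gamma -> is_inverse p Gamma Ginv ->
  persistently_exciting p Phi ->
  forall (T1 lam0 : R), 0 < T1 -> 0 < lam0 ->
  (forall t, T1 <= t ->
     lambda_min_ge p (madd (Pi t) (msum N (fun q => Pi (ts q)))) lam0) ->
  (* (i) *)
  ((forall t, 0 <= t -> forall i, (i < n)%nat -> epsT t i = 0) ->
   forall What : R -> mat, estimator_law p n Gamma Pi K N ts What ->
     (forall t, T1 <= t -> exists d,
        derivable_pt_lim (fun s => V1 p n Ginv (msub W1 (What s))) t d /\
        d <= - lam0 * (frob p n (msub W1 (What t))) ^ 2) /\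
     (forall e, 0 < e -> exists T, forall t, T <= t ->
        frob p n (msub W1 (What t)) < e))
  /\
  (* (ii) *)
  (exists nu1, 0 <= nu1 /\
     (forall t, 0 <= t ->
        frob p n (madd (y1 t) (msum N (fun q => y1 (ts q)))) <= nu1) /\
     exists b, forall What : R -> mat, estimator_law p n Gamma Pi K N ts What ->
       (forall t, T1 <= t -> exists d,
          derivable_pt_lim (fun s => V1 p n Ginv (msub W1 (What s))) t d /\
          d <= - lam0 * (frob p n (msub W1 (What t))) ^ 2
               + nu1 * frob p n (msub W1 (What t)) /\
          (nu1 / lam0 < frob p n (msub W1 (What t)) -> d < 0)) /\
       (exists T, forall t, T <= t -> frob p n (msub W1 (What t)) <= b)).
Proof.
  intros p W1 Phi epsT x p1 p2 HPhipc HepsTpc HPhib HepsTb Hxc Hxd k l Hk Hl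
    Phif xf xfd epsf HPfc HPf0 HPfd Hxfc Hxf0 Hxfd Hefc Hef0 Hefd Pi K y1 HPi HK Hy1
    N ts HNp Hts Gamma Ginv HGs HGpd HGinv HPE T1 lam0 HT1 Hlam0 HPlam.
  assert (Hp1 : 0 <= p1) by (pose proof (HPhib 0 ltac:(lra)); pose proof (sqrt_pos (fsum p (fun i => Phi 0 i ^ 2))); unfold vnorm in *; lra).
  assert (Hp2 : 0 <= p2) by (pose proof (HepsTb 0 ltac:(lra)); pose proof (sqrt_pos (fsum n (fun i => epsT 0 i ^ 2))); unfold vnorm in *; lra).
  assert (HL : forall T, 0 < T -> exists L, forall t, 0 < t < T -> ~ In t L ->
             cont_at_vec p Phi t /\ cont_at_vec n epsT t).
  { intros T HT. destruct (pc_vec_list p Phi T HT HPhipc) as [L1 HL1].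
    destruct (pc_vec_list n epsT T HT HepsTpc) as [L2 HL2].
    exists (L1 ++ L2). intros t Ht Hn. split.
    - apply HL1; auto. intro; apply Hn; apply in_or_app; auto.
    - apply HL2; auto. intro; apply Hn; apply in_or_app; auto. }
  assert (BPhif : forall t, 0 <= t -> forall r, (r < p)%nat -> Rabs (Phif t r) <= p1).
  { intros t Ht r Hr. apply (filt_bound (fun s => Phif s r) (fun s => Phi s r) k p1 Hk); auto.
    - intros s Hs. eapply Rle_trans; [apply comp_le_vnorm; eauto| apply HPhib; auto].
    - intros T HT. destruct (HL T HT) as [L HL']. exists L. intros s Hs Hn.
      apply HPfd; [lra| apply HL'; auto| auto]. }
  assert (Bepsf : forall B, (forall t, 0 <= t -> vnorm n (epsT t) <= B) ->
            forall t, 0 <= t -> forall j, (j < n)%nat -> Rabs (epsf t j) <= B).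
  { intros B HB t Ht j Hj. apply (filt_bound (fun s => epsf s j) (fun s => epsT s j) k B Hk); auto.
    - intros s Hs. eapply Rle_trans; [apply comp_le_vnorm; eauto| apply HB; auto].
    - intros T HT. destruct (HL T HT) as [L HL']. exists L. intros s Hs Hn.
      apply Hefd; [lra| apply HL'; auto| auto]. }
  assert (Zrel : forall t, 0 < t -> forall j, (j < n)%nat ->
            xfd t j = fsum p (fun r => W1 r j * Phif t r) + epsf t j).
  { intros t0 Ht0 j Hj.
    set (z := fun s => / k * x s j + (- / k) * xf s j + fsum p (fun r => (- W1 r j) * Phif s r) + (-1) * epsf s j).
    assert (Hz : forall t, 0 <= t -> z t = 0).
    { intros t Ht.
      assert (Hrc : forall b, rel_cont z 0 b).
      { intros b. destruct (Rle_or_lt 0 b) as [Hb|Hb]; [|intros y Hy; lra].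
        unfold z. repeat apply rel_cont_plus; auto.
        - apply rel_cont_mult; auto; [apply rel_cont_const| apply rel_cont_nonneg; auto].
        - apply rel_cont_mult; auto; [apply rel_cont_const| apply rel_cont_nonneg; auto].
        - apply (rel_cont_fsum p (fun r s => - W1 r j * Phif s r)); auto. intros r Hr.
          apply rel_cont_mult; auto; [apply rel_cont_const| apply rel_cont_nonneg; auto].
        - apply rel_cont_mult; auto; [apply rel_cont_const| apply rel_cont_nonneg; auto]. }
      assert (Hz0 : z 0 = 0).
      { unfold z. rewrite Hxf0, Hef0 by auto. rewrite fsum_zero; [ring|].
        intros r Hr. rewrite HPf0 by auto. ring. }
      assert (Hg : good_ode z (fun _ => 0) k).
      { intros T HT. destruct (HL T HT) as [L HL']. exists L. intros s Hs Hn.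
        destruct (HL' s Hs Hn) as [HcP HcE].
        pose proof (Hxd s ltac:(lra) HcP HcE j Hj) as Hdx.
        destruct (Hxfd s ltac:(lra) j Hj) as [Hdxf Hkx].
        destruct (Hefd s ltac:(lra) HcE j Hj) as [e [Hde Hke]].
        set (dr := fun r => epsilon (inhabits 0) (fun d => derivable_pt_lim (fun s => Phif s r) s d /\ k * d + Phif s r = Phi s r)).
        assert (Hdr : forall r, (r < p)%nat -> derivable_pt_lim (fun s => Phif s r) s (dr r) /\ k * dr r + Phif s r = Phi s r).
        { intros r Hr. unfold dr. apply (epsilon_spec (inhabits 0) (fun d => derivable_pt_lim (fun s => Phif s r) s d /\ k * d + Phif s r = Phi s r)).
          apply HPfd; auto; lra. }
        exists (/ k * (mvec p (mtr W1) (Phi s) j + epsT s j) + (- / k) * xfd s j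
                + fsum p (fun r => (- W1 r j) * dr r) + (-1) * e).
        split.
        - unfold z. repeat apply derivable_pt_lim_plus.
          + apply derivable_pt_lim_scal; auto.
          + apply derivable_pt_lim_scal; auto.
          + apply (fsum_deriv p (fun r s => - W1 r j * Phif s r)). intros r Hr.
            apply derivable_pt_lim_scal. apply Hdr; auto.
          + apply derivable_pt_lim_scal; auto.
        - assert (Hsum : k * fsum p (fun r => - W1 r j * dr r) + fsum p (fun r => - W1 r j * Phif s r)
                         = - mvec p (mtr W1) (Phi s) j).
          { unfold mvec, mtr. rewrite <- fsum_scal, <- fsum_plus, <- fsum_opp. apply fsum_ext; intros r Hr.
            destruct (Hdr r Hr) as [_ E]. rewrite <- E. ring. }
          unfold z. rewrite <- Hkx, <- Hke.
          replace (mvec p (mtr W1) (Phi s) j) with (- (k * fsum p (fun r => - W1 r j * dr r) + fsum p (fun r => - W1 r j * Phif s r))) by lra.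
          field. lra. }
      assert (z t <= 0) by (apply (ode_upper z (fun _ => 0) k 0); auto; intros; lra).
      assert (0 <= z t) by (apply (ode_lower z (fun _ => 0) k 0); auto; intros; lra).
      lra. }
    pose proof (Hz t0 ltac:(lra)) as Hz0. unfold z in Hz0.
    destruct (Hxfd t0 Ht0 j Hj) as [_ Hkx].
    rewrite <- Hkx in Hz0.
    assert (E : fsum p (fun r => - W1 r j * Phif t0 r) = - fsum p (fun r => W1 r j * Phif t0 r)).
    { rewrite <- fsum_opp. apply fsum_ext; intros; ring. }
    rewrite E in Hz0.
    assert (Hk' : / k * (k * xfd t0 j + xf t0 j) + - / k * xf t0 j = xfd t0 j) by (field; lra).
    lra. }
  assert (Krel : forall t, 0 <= t -> forall r j, (r < p)%nat -> (j < n)%nat ->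
            K t r j = fsum p (fun u => W1 u j * Pi t r u) - y1 t r j).
  { intros t Ht r j Hr Hj.
    assert (Hg : is_integral (fun s => fsum p (fun u => W1 u j * (exp (- l * (t - s)) * (Phif s r * Phif s u)))
                     + 1 * (exp (- l * (t - s)) * (Phif s r * epsf s j))) 0 t
                 (fsum p (fun u => W1 u j * Pi t r u) + 1 * (- y1 t r j))).
    { apply is_int_plus; [|apply Hy1; auto].
      apply (is_int_fsum p (fun u s => exp (- l * (t - s)) * (Phif s r * Phif s u)) (fun u => W1 u j) (fun u => Pi t r u)).
      intros u Hu. apply HPi; auto. }
    pose proof (is_int_eq_open _ _ 0 t _ _ Ht (HK t Ht r j Hr Hj) Hg) as E.
    rewrite E; [ring|].
    intros s Hs. rewrite Zrel by (lra || auto).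
    rewrite Rmult_plus_distr_l, Rmult_plus_distr_l, Rmult_1_l. f_equal.
    rewrite <- fsum_scal, <- fsum_scal. apply fsum_ext; intros; ring. }
  assert (Pisym : forall t, 0 <= t -> symmetric p (Pi t)).
  { intros t Ht i j Hi Hj. apply (is_int_eq_open _ _ 0 t _ _ Ht (HPi t Ht i j Hi Hj) (HPi t Ht j i Hj Hi)).
    intros; ring. }
  set (P := fun t => madd (Pi t) (msum N (fun q => Pi (ts q)))).
  assert (Psym : forall t, 0 <= t -> symmetric p (P t)).
  { intros t Ht i j Hi Hj. unfold P, madd, msum. rewrite Pisym by auto. f_equal.
    apply fsum_ext; intros q Hq. apply Pisym; auto. }
  assert (y1b : forall B, 0 <= B -> (forall t, 0 <= t -> forall j, (j < n)%nat -> Rabs (epsf t j) <= B) ->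
             forall t, 0 <= t -> forall r j, (r < p)%nat -> (j < n)%nat -> Rabs (y1 t r j) <= p1 * B / l).
  { intros B HB He t Ht r j Hr Hj. rewrite <- Rabs_Ropp.
    apply (exp_int_bound l t (p1 * B) (fun s => exp (- l * (t - s)) * (Phif s r * epsf s j)) _ Hl Ht); [nra| apply Hy1; auto|].
    intros s Hs. rewrite !Rabs_mult. rewrite (Rabs_pos_eq (exp _)) by (left; apply exp_pos).
    pose proof (BPhif s ltac:(lra) r Hr). pose proof (He s ltac:(lra) j Hj).
    pose proof (Rabs_pos (Phif s r)). pose proof (Rabs_pos (epsf s j)).
    assert (0 < exp (- l * (t - s))) by apply exp_pos.
    assert (Rabs (Phif s r) * Rabs (epsf s j) <= p1 * B) by nra. nra. }
  set (Y := fun t => madd (y1 t) (msum N (fun q => y1 (ts q)))).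
  assert (Yb : forall B, 0 <= B -> (forall t, 0 <= t -> forall j, (j < n)%nat -> Rabs (epsf t j) <= B) ->
             forall t, 0 <= t -> frob p n (Y t) <= nuB p n N p1 l B).
  { intros B HB He t Ht. apply frob_bound. intros r j Hr Hj. unfold Y, madd, msum.
    eapply Rle_trans; [apply Rabs_triang|].
    eapply Rle_trans; [apply Rplus_le_compat; [apply Rle_refl| apply fsum_abs]|].
    pose proof (y1b B HB He t Ht r j Hr Hj).
    assert (fsum N (fun q => Rabs (y1 (ts q) r j)) <= INR N * (p1 * B / l)).
    { rewrite <- fsum_const. apply fsum_le; intros q Hq. apply y1b; auto. }
    lra. }
  assert (HGis : symmetric p Ginv) by (apply (inv_sym p Gamma Ginv); auto).
  assert (DB : forall B, 0 <= B -> (forall t, 0 <= t -> forall j, (j < n)%nat -> Rabs (epsf t j) <= B) ->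
            forall What, estimator_law p n Gamma Pi K N ts What -> forall t, T1 <= t ->
            exists d, derivable_pt_lim (fun s => V1 p n Ginv (msub W1 (What s))) t d /\
              d <= - lam0 * frob p n (msub W1 (What t)) ^ 2 + nuB p n N p1 l B * frob p n (msub W1 (What t))).
  { intros B HB He What Hlaw t Ht.
    eexists; split.
    - apply (deriv_main p n Gamma Ginv Pi K y1 W1 N ts What t HGinv HGis).
      + intros r j Hr Hj. apply Krel; auto; lra.
      + intros q r j Hq Hr Hj. apply Krel; auto.
      + auto.
      + lra.
    - set (W := msub W1 (What t)).
      assert (H1 : lam0 * frob2 p n W <= fsum n (fun j => quad p (P t) (fun r => W1 r j - What t r j))).
      { rewrite frob2_cols, <- fsum_scal. apply fsum_le; intros j Hj.
        apply (quad_lower p (P t) lam0 (Psym t ltac:(lra)) (HPlam t Ht)). }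
      assert (H2 : fsum p (fun r => fsum n (fun j => (W1 r j - What t r j) * Y t r j))
                   <= frob p n W * nuB p n N p1 l B).
      { eapply Rle_trans; [apply RRle_abs|].
        eapply Rle_trans; [apply (frob_CS p n W (Y t))|].
        apply Rmult_le_compat_l; [apply frob_nonneg| apply Yb; auto; lra]. }
      rewrite frob_sq. fold W. fold (P t). fold (Y t).
      change (madd (Pi t) (msum N (fun q => Pi (ts q)))) with (P t).
      change (madd (y1 t) (msum N (fun q => y1 (ts q)))) with (Y t).
      lra. }
  set (c2 := / 2 * asum p Ginv + 1).
  set (C := 2 * (1 + asum p Gamma)).
  assert (Hc2 : 0 < c2) by (unfold c2; pose proof (asum_nonneg p Ginv); lra).
  assert (HC : 0 < C) by (unfold C; pose proof (asum_nonneg p Gamma); lra).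
  assert (Vup : forall W, V1 p n Ginv W <= c2 * frob p n W ^ 2).
  { intros W. rewrite frob_sq. pose proof (V1_upper p n Ginv W). pose proof (frob2_nonneg p n W).
    unfold c2. nra. }
  assert (Vlo : forall W, frob p n W ^ 2 <= C * V1 p n Ginv W).
  { intros W. rewrite frob_sq. apply V1_lower; auto. }
  assert (Vnn : forall W, 0 <= V1 p n Ginv W) by (intros; apply (V1_nonneg p n Gamma); auto).
  split.
  -
    intros Heps0 What Hlaw.
    assert (He0 : forall t, 0 <= t -> forall j, (j < n)%nat -> Rabs (epsf t j) <= 0).
    { apply Bepsf. intros t Ht. unfold vnorm. rewrite fsum_zero.
      - rewrite sqrt_0; lra.
      - intros i Hi. rewrite Heps0 by auto. ring. }
    assert (Hnu0 : nuB p n N p1 l 0 = 0).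
    { unfold nuB. replace (p1 * 0 / l) with 0 by (field; lra). replace (INR p * (INR n * ((INR N + 1) * 0) ^ 2)) with 0 by ring. apply sqrt_0. }
    assert (DB0 : forall t, T1 <= t -> exists d,
        derivable_pt_lim (fun s => V1 p n Ginv (msub W1 (What s))) t d /\
        d <= - lam0 * frob p n (msub W1 (What t)) ^ 2).
    { intros t Ht. destruct (DB 0 ltac:(lra) He0 What Hlaw t Ht) as [d [Hd1 Hd2]].
      exists d; split; auto. rewrite Hnu0 in Hd2. lra. }
    split; auto.
    apply (lyap_decay (fun s => V1 p n Ginv (msub W1 (What s))) (fun s => frob p n (msub W1 (What s))) T1 (lam0 / c2) C).
    + unfold Rdiv; apply Rmult_lt_0_compat; [lra| apply Rinv_0_lt_compat; lra].
    + lra.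
    + intros t Ht. destruct (DB0 t Ht) as [d [Hd1 Hd2]]. exists d; split; auto.
      pose proof (Vup (msub W1 (What t))).
      assert (lam0 / c2 * V1 p n Ginv (msub W1 (What t)) <= lam0 * frob p n (msub W1 (What t)) ^ 2).
      { unfold Rdiv. replace (lam0 * / c2 * V1 p n Ginv (msub W1 (What t))) with
          (lam0 * (V1 p n Ginv (msub W1 (What t)) / c2)) by (field; lra).
        apply Rmult_le_compat_l; [lra|]. apply (Rmult_le_reg_l c2); auto.
        replace (c2 * (V1 p n Ginv (msub W1 (What t)) / c2)) with (V1 p n Ginv (msub W1 (What t))) by (field; lra).
        lra. }
      lra.
    + intros; apply Vnn.
    + intros; apply frob_nonneg.
    + intros; apply Vlo.
  -
    set (nu1 := nuB p n N p1 l p2).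
    assert (He2 := Bepsf p2 HepsTb).
    exists nu1. split; [apply sqrt_pos|]. split.
    + intros t Ht. apply (Yb p2 Hp2 He2 t Ht).
    + exists (bUUB C c2 nu1 lam0). intros What Hlaw. split.
      * intros t Ht. destruct (DB p2 Hp2 He2 What Hlaw t Ht) as [d [Hd1 Hd2]].
        exists d. split; [auto| split; [auto|]].
        intros Hlt. set (f := frob p n (msub W1 (What t))) in *.
        assert (Hf0 : 0 < f).
        { assert (0 <= nu1 / lam0) by (unfold Rdiv; apply Rmult_le_pos; [apply sqrt_pos| left; apply Rinv_0_lt_compat; lra]). lra. }
        assert (nu1 < lam0 * f).
        { apply (Rmult_lt_compat_l lam0) in Hlt; auto.
          replace (lam0 * (nu1 / lam0)) with nu1 in Hlt by (field; lra). lra. }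
        fold nu1 in Hd2. nra.
      * apply (lyap_uub (fun s => V1 p n Ginv (msub W1 (What s))) (fun s => frob p n (msub W1 (What s))) T1 C c2 nu1 lam0); auto.
        -- apply sqrt_pos.
        -- intros t Ht. apply (DB p2 Hp2 He2 What Hlaw t Ht).
        -- intros; apply frob_nonneg.
Qed.
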